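(* (i) Let $\sigma\in\mathbb R^N$ with $\min_{1\le j\le N}\sigma_j>1/2$. Then for all $u,v\in G^{\sigma,0}$, $$\|uv\|_{G^{\sigma,0}}\lesssim\|u\|_{G^{\sigma,0}}\|v\|_{G^{\sigma,0}}.$$ (ii) Let $\sigma_1=0$, $\min_{2\le j\le N}\sigma_j>1/2$ and $\beta>1/4$. Then for all $\hat u,\hat v:\dot{\mathbb Z}^N\to\mathbb C$, $$\Big\|\sum_{k'\in\dot{\mathbb Z}^N,\,k'\neq k}\langle|\alpha\cdot k||\alpha\cdot(k-k')||\alpha\cdot k'|\rangle^{-\beta}|\hat u(k-k')||\hat v(k')|\Big\|_{\hat G^{\sigma,0}_k}\lesssim\|\hat u\|_{\hat G^{\sigma,0}}\|\hat v\|_{\hat G^{\sigma,0}}.$$ The implicit constants depend only on $\sigma,\beta,\alpha,N$.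
   Context: Standing setting: fix $N\in\mathbb N$ and $\alpha\in\mathbb R^N$ with $\alpha\cdot k\neq0$ for all $k\in\dot{\mathbb Z}^N:=\mathbb Z^N\setminus\{0\}$. Write $\langle x\rangle=(1+|x|^2)^{1/2}$. For $\hat f:\dot{\mathbb Z}^N\to\mathbb C$, $$\|\hat f\|_{\hat G^{\sigma,a}}=\Big(\sum_{k\in\dot{\mathbb Z}^N}|\alpha\cdot k|^{2a}\prod_j\langle k_j\rangle^{2\sigma_j}|\hat f(k)|^2\Big)^{1/2},$$ and $\|f\|_{G^{\sigma,a}}=\|\hat f\|_{\hat G^{\sigma,a}}$ for $f=\sum_k\hat f(k)e^{i(\alpha\cdot k)x}$. The product is defined by $\widehat{uv}(k)=\sum_{k'\in\dot{\mathbb Z}^N,\,k'\neq k}\hat u(k-k')\hat v(k')$ for $k\in\dot{\mathbb Z}^N$; the zero mode is discarded. *)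

(* Defs.v *)
From Stdlib Require Import Reals Lra ZArith List.
Import ListNotations.
Open Scope R_scope.

Definition Cpx := (R * R)%type.
Definition Cmod (z : Cpx) : R := sqrt (fst z ^ 2 + snd z ^ 2).
Definition Cmul (z w : Cpx) : Cpx :=
  (fst z * fst w - snd z * snd w, fst z * snd w + snd z * fst w).

(* Lattice points of Z^N are lists of integers of length N (index j = 0..N-1,
   so the paper's coordinate j corresponds to index j-1). *)
Definition InZN (N : nat) (k : list Z) : Prop := length k = N.
Definition InDotZN (N : nat) (k : list Z) : Prop :=
  length k = N /\ exists j, (j < N)%nat /\ nth j k 0%Z <> 0%Z.

Definition vsub (N : nat) (k k' : list Z) : list Z :=
  map (fun j => (nth j k 0 - nth j k' 0)%Z) (seq 0 N).

Definition adot (N : nat) (alpha : nat -> R) (k : list Z) : R :=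
  fold_right (fun j acc => alpha j * IZR (nth j k 0%Z) + acc) 0 (seq 0 N).

Definition jbr (x : R) : R := sqrt (1 + x ^ 2).

(* Standing non-resonance hypothesis: alpha . k <> 0 for k in \dot Z^N *)
Definition NonResonant (N : nat) (alpha : nat -> R) : Prop :=
  forall k, InDotZN N k -> adot N alpha k <> 0.

Definition Gweight (N : nat) (alpha sigma : nat -> R) (a : R) (k : list Z) : R :=
  Rpower (Rabs (adot N alpha k)) (2 * a) *
  fold_right (fun j acc => Rpower (jbr (IZR (nth j k 0%Z))) (2 * sigma j) * acc)
    1 (seq 0 N).

Definition lsum {A : Type} (f : A -> R) (F : list A) : R :=
  fold_right (fun x acc => f x + acc) 0 F.

Definition FinSub (D : list Z -> Prop) (F : list (list Z)) : Prop :=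
  NoDup F /\ forall x, In x F -> D x.

(* SqNormLe N alpha sigma a g M :  sum_{k in \dot Z^N} weight(k) * g(k)^2 <= M,
   i.e. every finite partial sum is <= M.  Thus
   ||f||_{G^{sigma,a}} <= sqrt M  iff  SqNormLe ... (fun k => Cmod (f k)) M
   (for M >= 0); the norm is finite iff some such M exists. *)
Definition SqNormLe (N : nat) (alpha sigma : nat -> R) (a : R)
  (g : list Z -> R) (M : R) : Prop :=
  forall F, FinSub (InDotZN N) F ->
    lsum (fun k => Gweight N alpha sigma a k * g k ^ 2) F <= M.

(* Unconditional summation of a real family over a domain D (net of finite subsets). *)
Definition RHasSum (D : list Z -> Prop) (f : list Z -> R) (s : R) : Prop :=
  forall eps, 0 < eps -> exists F0, FinSub D F0 /\
    forall F, FinSub D F -> incl F0 F -> Rabs (lsum f F - s) < eps.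

Definition CHasSum (D : list Z -> Prop) (f : list Z -> Cpx) (s : Cpx) : Prop :=
  RHasSum D (fun x => fst (f x)) (fst s) /\ RHasSum D (fun x => snd (f x)) (snd s).

Definition ConvDom (N : nat) (k : list Z) (k' : list Z) : Prop :=
  InDotZN N k' /\ k' <> k.

Definition IsProduct (N : nat) (u v w : list Z -> Cpx) : Prop :=
  forall k, InDotZN N k ->
    CHasSum (ConvDom N k) (fun k' => Cmul (u (vsub N k k')) (v k')) (w k).

(* Main.v *)
Require Import Defs.
From Stdlib Require Import Reals Lra Lia ZArith List Psatz ClassicalEpsilon.
Import ListNotations.
Open Scope R_scope.


Section LS.
Context {A : Type}.

Lemma lsum_nil (f : A -> R) : lsum f [] = 0.
Proof. reflexivity. Qed.
Lemma lsum_cons (f : A -> R) a l : lsum f (a :: l) = f a + lsum f l.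
Proof. reflexivity. Qed.
Lemma lsum_app (f : A -> R) l1 l2 : lsum f (l1 ++ l2) = lsum f l1 + lsum f l2.
Proof. induction l1; simpl; [ring| rewrite IHl1; ring]. Qed.
Lemma lsum_le (f g : A -> R) l : (forall x, In x l -> f x <= g x) -> lsum f l <= lsum g l.
Proof. induction l; simpl; intros H; [lra|]. 
  assert (f a <= g a) by auto. assert (lsum f l <= lsum g l) by auto. lra. Qed.
Lemma lsum_nonneg (f : A -> R) l : (forall x, In x l -> 0 <= f x) -> 0 <= lsum f l.
Proof. induction l; simpl; intros H; [lra|].
  assert (0 <= f a) by auto. assert (0 <= lsum f l) by auto. lra. Qed.
Lemma lsum_ext (f g : A -> R) l : (forall x, In x l -> f x = g x) -> lsum f l = lsum g l.
Proof. induction l; simpl; intros H; [lra|]. rewrite H by auto. rewrite IHl; auto. Qed.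
Lemma lsum_scal (c : R) (f : A -> R) l : lsum (fun x => c * f x) l = c * lsum f l.
Proof. induction l; simpl; [ring| rewrite IHl; ring]. Qed.
Lemma lsum_plus (f g : A -> R) l : lsum (fun x => f x + g x) l = lsum f l + lsum g l.
Proof. induction l; simpl; [ring| rewrite IHl; ring]. Qed.
Lemma lsum_minus (f g : A -> R) l : lsum (fun x => f x - g x) l = lsum f l - lsum g l.
Proof. induction l; simpl; [ring| rewrite IHl; ring]. Qed.
Lemma lsum_abs (f : A -> R) l : Rabs (lsum f l) <= lsum (fun x => Rabs (f x)) l.
Proof. induction l; simpl. rewrite Rabs_R0; lra.
  eapply Rle_trans; [apply Rabs_triang|]. lra. Qed.

Lemma lsum_incl_le (f : A -> R) (L M : list A) :
  NoDup L -> incl L M -> (forall x, In x M -> 0 <= f x) -> lsum f L <= lsum f M.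
Proof.
  revert M. induction L as [|a L IH]; intros M HN Hi Hp; simpl.
  - apply lsum_nonneg; auto.
  - inversion HN; subst.
    assert (Ha : In a M) by (apply Hi; left; auto).
    destruct (in_split a M Ha) as [M1 [M2 ->]].
    rewrite lsum_app; simpl.
    assert (lsum f L <= lsum f (M1 ++ M2)).
    { apply IH; auto.
      - intros y Hy. assert (Hy' : In y (M1 ++ a :: M2)) by (apply Hi; right; auto).
        apply in_app_or in Hy'. apply in_or_app. destruct Hy' as [H|[H|H]]; auto.
        subst; contradiction.
      - intros y Hy. apply Hp. apply in_app_or in Hy. apply in_or_app. simpl. tauto. }
    rewrite lsum_app in H. lra.
Qed.
End LS.

Lemma lsum_map {A B : Type} (f : B -> R) (g : A -> B) l : lsum f (map g l) = lsum (fun x => f (g x)) l.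
Proof. induction l; simpl; [ring| rewrite IHl; ring]. Qed.

Lemma lsum_flat_map {A B : Type} (f : B -> R) (g : A -> list B) l :
  lsum f (flat_map g l) = lsum (fun x => lsum f (g x)) l.
Proof. induction l; simpl; [ring| rewrite lsum_app, IHl; ring]. Qed.

Lemma lsum_swap {A B : Type} (g : A -> B -> R) L M :
  lsum (fun x => lsum (g x) M) L = lsum (fun y => lsum (fun x => g x y) L) M.
Proof.
  induction L; simpl.
  - induction M; simpl; [ring| rewrite <- IHM; ring].
  - rewrite IHL, <- lsum_plus. reflexivity.
Qed.

Lemma lsum_prod {A B : Type} (f : A -> R) (g : B -> R) L M :
  lsum (fun p => f (fst p) * g (snd p)) (list_prod L M) = lsum f L * lsum g M.
Proof.
  induction L; simpl; [ring|]. rewrite lsum_app, IHL, lsum_map. simpl.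
  rewrite lsum_scal. ring.
Qed.

Lemma lsum_CS {A : Type} (f g : A -> R) l :
  (lsum (fun x => f x * g x) l) ^ 2 <= lsum (fun x => f x ^ 2) l * lsum (fun x => g x ^ 2) l.
Proof.
  induction l as [|a l IH]; [simpl; lra| rewrite !lsum_cons].
  set (S := lsum (fun x => f x * g x) l) in *.
  set (F := lsum (fun x => f x ^ 2) l) in *.
  set (G := lsum (fun x => g x ^ 2) l) in *.
  assert (HF : 0 <= F) by (apply lsum_nonneg; intros; nra).
  assert (HG : 0 <= G) by (apply lsum_nonneg; intros; nra).
  assert (Hs : Rabs S <= sqrt F * sqrt G).
  { rewrite <- sqrt_mult by auto. rewrite <- sqrt_Rsqr_abs. apply sqrt_le_1_alt.
    unfold Rsqr. simpl in IH. lra. }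
  assert (HsF := sqrt_sqrt F HF). assert (HsG := sqrt_sqrt G HG).
  assert (0 <= sqrt F) by apply sqrt_pos. assert (0 <= sqrt G) by apply sqrt_pos.
  assert (H2 : 2 * (f a * g a) * S <= f a ^ 2 * G + g a ^ 2 * F).
  { assert (2 * (f a * g a) * S <= 2 * Rabs (f a) * Rabs (g a) * (sqrt F * sqrt G)).
    { assert (f a * g a * S <= Rabs (f a * g a * S)) by apply Rle_abs.
      rewrite !Rabs_mult in H1.
      assert (Rabs (f a) * Rabs (g a) * Rabs S <= Rabs (f a) * Rabs (g a) * (sqrt F * sqrt G)).
      { apply Rmult_le_compat_l; [apply Rmult_le_pos; apply Rabs_pos| exact Hs]. }
      lra. }
    assert (0 <= (Rabs (f a) * sqrt G - Rabs (g a) * sqrt F) ^ 2) by apply pow2_ge_0.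
    rewrite <- (pow2_abs (f a)), <- (pow2_abs (g a)). rewrite <- HsF, <- HsG. nra. }
  nra.
Qed.

Lemma NoDup_map_in {A B : Type} (f : A -> B) (l : list A) :
  NoDup l -> (forall x y, In x l -> In y l -> f x = f y -> x = y) -> NoDup (map f l).
Proof.
  induction l as [|a l IH]; intros HN Hi; simpl; constructor.
  - intros Hin. apply in_map_iff in Hin as [y [Hy Hy']].
    inversion HN; subst. assert (y = a) by (apply Hi; simpl; auto). subst; contradiction.
  - inversion HN; subst. apply IH; auto. intros; apply Hi; simpl; auto.
Qed.

Lemma lsum_filter_split {A : Type} (f : A -> R) (p : A -> bool) l :
  lsum f l = lsum f (filter p l) + lsum f (filter (fun x => negb (p x)) l).
Proof. induction l; simpl; [ring|]. destruct (p a); simpl; rewrite IHl; ring. Qed.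

Lemma NoDup_filter' {A : Type} (p : A -> bool) l : NoDup l -> NoDup (filter p l).
Proof. apply NoDup_filter. Qed.


Definition pw (y s : R) : R := Rpower (jbr y) s.

Lemma jbr_ge1 y : 1 <= jbr y.
Proof. unfold jbr. rewrite <- sqrt_1 at 1. apply sqrt_le_1_alt. nra. Qed.
Lemma jbr_pos y : 0 < jbr y.
Proof. pose proof (jbr_ge1 y); lra. Qed.
Lemma jbr_sq y : jbr y * jbr y = 1 + y ^ 2.
Proof. unfold jbr. apply sqrt_sqrt. nra. Qed.
Lemma jbr_ge_abs y : Rabs y <= jbr y.
Proof. unfold jbr. rewrite <- sqrt_Rsqr_abs. apply sqrt_le_1_alt. unfold Rsqr. nra. Qed.
Lemma jbr_mono y z : Rabs y <= Rabs z -> jbr y <= jbr z.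
Proof. intros H. unfold jbr. apply sqrt_le_1_alt.
  rewrite <- (pow2_abs y), <- (pow2_abs z). pose proof (Rabs_pos y). nra. Qed.

Lemma Rpower_pos a s : 0 < Rpower a s.
Proof. unfold Rpower. apply exp_pos. Qed.
Lemma Rpower_zero a : Rpower a 0 = 1.
Proof. unfold Rpower. rewrite Rmult_0_l. apply exp_0. Qed.
Lemma Rpower_neg_le s a b : 0 <= s -> 0 < a <= b -> Rpower b (- s) <= Rpower a (- s).
Proof. intros Hs Hab. rewrite !Rpower_Ropp.
  apply Rinv_le_contravar. apply Rpower_pos. apply Rle_Rpower_l; auto. Qed.
Lemma Rpower_le_base s a b : 0 <= s -> 0 < a <= b -> Rpower a s <= Rpower b s.
Proof. intros; apply Rle_Rpower_l; auto. Qed.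

Lemma pw_pos y s : 0 < pw y s.
Proof. apply Rpower_pos. Qed.
Lemma pw_0 y : pw y 0 = 1.
Proof. apply Rpower_zero. Qed.
Lemma pw_le1 y s : 0 <= s -> pw y (- s) <= 1.
Proof. intros Hs. unfold pw. rewrite <- (Rpower_zero (jbr y)).
  apply Rle_Rpower. apply jbr_ge1. lra. Qed.
Lemma pw_mono_neg y z s : 0 <= s -> Rabs y <= Rabs z -> pw z (- s) <= pw y (- s).
Proof. intros Hs H. unfold pw. apply Rpower_neg_le; auto. split. apply jbr_pos. apply jbr_mono; auto. Qed.
Lemma pw_mono_exp y s t : s <= t -> pw y s <= pw y t.
Proof. intros; unfold pw; apply Rle_Rpower; auto. apply jbr_ge1. Qed.

Lemma ln_le_xm1 x : 0 < x -> ln x <= x - 1.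
Proof. intros Hx. rewrite <- (ln_exp (x - 1)).
  destruct (Req_dec (x - 1) 0) as [E|E].
  - rewrite E, exp_0. replace x with 1 by lra. rewrite ln_1. lra.
  - left. apply ln_increasing; auto. pose proof (exp_ineq1 (x - 1) E). lra. Qed.

Lemma tele_step q n : 0 < q -> 1 < n ->
  Rpower n (- (q + 1)) <= (Rpower (n - 1) (- q) - Rpower n (- q)) / q.
Proof.
  intros Hq Hn.
  assert (E : Rpower (n - 1) (- q) = Rpower n (- q) * Rpower ((n - 1) / n) (- q)).
  { rewrite Rpower_mult_distr by (try apply Rdiv_lt_0_compat; lra).
    f_equal. field. lra. }
  assert (Hb : 1 + q / n <= Rpower ((n - 1) / n) (- q)).
  { unfold Rpower. eapply Rle_trans; [|apply exp_ineq1_le].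
    assert (ln ((n - 1) / n) <= (n - 1) / n - 1) by (apply ln_le_xm1; apply Rdiv_lt_0_compat; lra).
    assert ((n - 1) / n - 1 = - (1 / n)) by (field; lra).
    assert (q / n = q * (1 / n)) by (field; lra).
    nra. }
  assert (E2 : Rpower n (- (q + 1)) = Rpower n (- q) * / n).
  { replace (- (q + 1)) with (- q + - 1) by ring. rewrite Rpower_plus.
    rewrite Rpower_Ropp with (y := 1), Rpower_1 by lra. reflexivity. }
  rewrite E, E2. pose proof (Rpower_pos n (- q)).
  set (P := Rpower n (- q)) in *. set (Q := Rpower ((n - 1) / n) (- q)) in *.
  assert (q / n = q * / n) by reflexivity.
  assert (P * Q - P >= P * (q / n)) by nra.
  apply Rmult_le_reg_r with q; auto.
  replace ((P * Q - P) / q * q) with (P * Q - P) by (field; lra).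
  assert (P * / n * q = P * (q / n)) by (unfold Rdiv; ring). lra.
Qed.

Lemma zeta_bound (s K : R) (M : nat) (h : nat -> R) : 1 < s -> 0 <= K ->
  (forall n, h n <= 1) -> (forall n, (2 <= n)%nat -> h n <= K * Rpower (INR n) (- s)) ->
  lsum h (seq 0 (M + 2)) <= 2 + K * (1 - Rpower (INR (M + 1)) (- (s - 1))) / (s - 1).
Proof.
  intros Hs HK H1 H2. induction M.
  - replace (INR (0 + 1)) with 1 by (simpl; ring). unfold Rpower at 1. rewrite ln_1, Rmult_0_r, exp_0.
    simpl. pose proof (H1 0%nat); pose proof (H1 1%nat).
    replace (1 - 1) with 0 by ring. unfold Rdiv. rewrite Rmult_0_r, Rmult_0_l. lra.
  - replace (S M + 2)%nat with (S (M + 2)) by lia. rewrite seq_S, lsum_app. simpl lsum at 2.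
    assert (h (0 + (M + 2))%nat <= K * ((Rpower (INR (M + 1)) (- (s - 1)) - Rpower (INR (S M + 1)) (- (s - 1))) / (s - 1))).
    { eapply Rle_trans. apply H2. lia. apply Rmult_le_compat_l; auto.
      replace (INR (M + 1)) with (INR (0 + (M + 2)) - 1) by (rewrite !plus_INR; simpl; ring).
      replace (INR (S M + 1)) with (INR (0 + (M + 2))) by (f_equal; lia).
      replace (- s) with (- ((s - 1) + 1)) by ring. apply tele_step. lra.
      pose proof (lt_INR 1 (0 + (M+2)) ltac:(lia)) as Hl. replace (INR 1) with 1 in Hl by reflexivity. exact Hl. }
    set (T1 := Rpower (INR (M + 1)) (- (s - 1))) in *.
    set (T2 := Rpower (INR (S M + 1)) (- (s - 1))) in *.
    assert (K * (1 - T1) / (s - 1) + K * ((T1 - T2) / (s - 1)) = K * (1 - T2) / (s - 1)) by (field; lra).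
    replace (0 + (M+2))%nat with (M+2)%nat in H by lia. lra.
Qed.

Lemma sum1D_nat (t s : R) : t <> 0 -> 1 < s ->
  exists C, forall l : list nat, NoDup l -> lsum (fun n => pw (Rabs t * INR n) (- s)) l <= C.
Proof.
  intros Ht Hs. set (K := Rpower (Rabs t) (- s)).
  assert (HK : 0 <= K) by (left; apply Rpower_pos).
  exists (2 + K * (1 - 0) / (s - 1)). intros l Hl.
  assert (Hat : 0 < Rabs t) by (apply Rabs_pos_lt; auto).
  set (h := fun n => pw (Rabs t * INR n) (- s)).
  assert (H1 : forall n, h n <= 1) by (intros; apply pw_le1; lra).
  assert (H2 : forall n, (2 <= n)%nat -> h n <= K * Rpower (INR n) (- s)).
  { intros n Hn. unfold h, pw, K.
    assert (0 < INR n) by (apply lt_0_INR; lia).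
    rewrite Rpower_mult_distr by auto.
    apply Rpower_neg_le; [lra|]. split. apply Rmult_lt_0_compat; auto.
    eapply Rle_trans; [|apply jbr_ge_abs]. rewrite Rabs_mult, Rabs_Rabsolu, (Rabs_right (INR n)) by lra. lra. }
  eapply Rle_trans.
  - apply (lsum_incl_le h l (seq 0 (list_max l + 2))); auto.
    + intros n Hn. apply in_seq. split; [lia|].
      assert (n <= list_max l)%nat.
      { pose proof (proj1 (list_max_le l (list_max l)) (Nat.le_refl _)) as HF.
        rewrite Forall_forall in HF. auto. }
      lia.
    + intros; left; apply pw_pos.
  - eapply Rle_trans. apply zeta_bound; eauto.
    assert (0 < Rpower (INR (list_max l + 1)) (- (s - 1))) by apply Rpower_pos.
    assert (K * (1 - Rpower (INR (list_max l + 1)) (- (s - 1))) <= K * (1 - 0)) by (apply Rmult_le_compat_l; lra).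
    unfold Rdiv. apply Rplus_le_compat_l. apply Rmult_le_compat_r. left; apply Rinv_0_lt_compat; lra. auto.
Qed.

Lemma sum1D (t s : R) : t <> 0 -> 1 < s ->
  exists C, forall (c : R) (L : list Z), NoDup L -> lsum (fun x => pw (t * IZR x + c) (- s)) L <= C.
Proof.
  intros Ht Hs. destruct (sum1D_nat t s Ht Hs) as [C HC]. exists (C + C). intros c L HL.
  set (z := - c / t). set (z1 := up z). destruct (archimed z) as [Hz1 Hz2]. fold z1 in Hz1, Hz2.
  assert (Hat : 0 < Rabs t) by (apply Rabs_pos_lt; auto).
  assert (Etc : forall x, t * IZR x + c = t * (IZR x - z)) by (intros; unfold z; field; auto).
  rewrite (lsum_filter_split _ (fun x => (z1 <=? x)%Z)).
  apply Rplus_le_compat.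
  - set (L1 := filter (fun x => (z1 <=? x)%Z) L).
    apply Rle_trans with (lsum (fun n => pw (Rabs t * INR n) (- s)) (map (fun x => Z.to_nat (x - z1)) L1)).
    + rewrite lsum_map. apply lsum_le. intros x Hx. unfold L1 in Hx. apply filter_In in Hx as [_ Hx].
      apply Z.leb_le in Hx. apply pw_mono_neg; [lra|].
      rewrite Etc, !Rabs_mult, Rabs_Rabsolu. rewrite INR_IZR_INZ, Z2Nat.id by lia.
      rewrite (Rabs_right (IZR _)) by (apply Rle_ge, IZR_le; lia).
      apply Rmult_le_compat_l; [lra|]. rewrite minus_IZR.
      rewrite Rabs_right. lra. apply IZR_le in Hx. lra.
    + apply HC. apply NoDup_map_in. apply NoDup_filter; auto.
      intros x y Hx Hy E. unfold L1 in Hx, Hy. apply filter_In in Hx as [_ Hx]. apply filter_In in Hy as [_ Hy].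
      apply Z.leb_le in Hx. apply Z.leb_le in Hy. lia.
  - set (L1 := filter (fun x => negb (z1 <=? x)%Z) L).
    apply Rle_trans with (lsum (fun n => pw (Rabs t * INR n) (- s)) (map (fun x => Z.to_nat (z1 - 1 - x)) L1)).
    + rewrite lsum_map. apply lsum_le. intros x Hx. unfold L1 in Hx. apply filter_In in Hx as [_ Hx].
      apply Bool.negb_true_iff, Z.leb_gt in Hx. apply pw_mono_neg; [lra|].
      rewrite Etc, !Rabs_mult, Rabs_Rabsolu. rewrite INR_IZR_INZ, Z2Nat.id by lia.
      rewrite (Rabs_right (IZR _)) by (apply Rle_ge, IZR_le; lia).
      apply Rmult_le_compat_l; [lra|]. rewrite !minus_IZR.
      assert (IZR x <= IZR z1 - 1) by (rewrite <- minus_IZR; apply IZR_le; lia).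
      rewrite Rabs_left1 by lra. lra.
    + apply HC. apply NoDup_map_in. apply NoDup_filter; auto.
      intros x y Hx Hy E. unfold L1 in Hx, Hy. apply filter_In in Hx as [_ Hx]. apply filter_In in Hy as [_ Hy].
      apply Bool.negb_true_iff, Z.leb_gt in Hx. apply Bool.negb_true_iff, Z.leb_gt in Hy. lia.
Qed.

Lemma sq_le_pos a p : 0 < a -> 0 < p -> a * a <= p * p -> a <= p.
Proof. intros Ha Hp H. destruct (Rle_dec a p) as [|n]; auto. apply Rnot_le_lt in n.
  assert (p * p < a * a) by (apply Rmult_le_0_lt_compat; lra). lra. Qed.

Lemma Rpower_inv_base r y : 0 < r -> Rpower (/ r) y = Rpower r (- y).
Proof. intros. unfold Rpower. rewrite ln_Rinv by auto. f_equal; ring. Qed.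

Lemma Rpower_sq a s : 0 < a -> Rpower (a * a) s = Rpower a (2 * s).
Proof. intros Ha. rewrite <- Rpower_mult_distr by auto. rewrite <- Rpower_plus. f_equal; ring. Qed.

Lemma ratio_bound y z s : 0 <= s ->
  pw (y + z) s / (pw y s * pw z s) <= Rpower 2 s * (pw y (- s) + pw z (- s)).
Proof.
  intros Hs. unfold pw.
  set (a := jbr (y + z)). set (b := jbr y). set (c := jbr z).
  assert (Ha : 0 < a) by apply jbr_pos. assert (Hb : 0 < b) by apply jbr_pos. assert (Hc : 0 < c) by apply jbr_pos.
  assert (Ea := jbr_sq (y + z)). assert (Eb := jbr_sq y). assert (Ec := jbr_sq z). fold a b c in Ea, Eb, Ec.
  pose proof (Rpower_pos b s). pose proof (Rpower_pos c s).
  pose proof (Rpower_pos b (- s)). pose proof (Rpower_pos c (- s)). pose proof (Rpower_pos 2 s).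
  destruct (Rle_dec (Rabs z) (Rabs y)) as [Hyz|Hyz].
  - assert (a <= 2 * b).
    { assert ((y + z) ^ 2 <= 4 * y ^ 2).
      { rewrite <- (pow2_abs y), <- (pow2_abs z) in *. rewrite <- (pow2_abs (y + z)).
        pose proof (Rabs_triang y z). pose proof (Rabs_pos (y + z)). nra. }
      nra. }
    assert (HH : Rpower a s <= Rpower (2 * b) s) by (apply Rpower_le_base; lra).
    rewrite <- Rpower_mult_distr in HH by lra.
    apply Rle_trans with (Rpower 2 s * Rpower c (- s)); [|nra].
    rewrite Rpower_Ropp. apply Rmult_le_reg_r with (Rpower b s * Rpower c s). nra.
    unfold Rdiv. rewrite Rmult_assoc, Rinv_l by nra.
    replace (Rpower 2 s * / Rpower c s * (Rpower b s * Rpower c s)) with (Rpower 2 s * Rpower b s) by (field; lra).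
    lra.
  - assert (a <= 2 * c).
    { assert ((y + z) ^ 2 <= 4 * z ^ 2).
      { rewrite <- (pow2_abs y), <- (pow2_abs z) in *. rewrite <- (pow2_abs (y + z)).
        pose proof (Rabs_triang y z). pose proof (Rabs_pos (y + z)). pose proof (Rabs_pos y). nra. }
      nra. }
    assert (HH : Rpower a s <= Rpower (2 * c) s) by (apply Rpower_le_base; lra).
    rewrite <- Rpower_mult_distr in HH by lra.
    apply Rle_trans with (Rpower 2 s * Rpower b (- s)); [|nra].
    rewrite Rpower_Ropp. apply Rmult_le_reg_r with (Rpower b s * Rpower c s). nra.
    unfold Rdiv. rewrite Rmult_assoc, Rinv_l by nra.
    replace (Rpower 2 s * / Rpower b s * (Rpower b s * Rpower c s)) with (Rpower 2 s * Rpower c s) by (field; lra).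
    lra.
Qed.

Definition Kb (b : R) := Rpower (sqrt 2) (2 * b) + Rpower (sqrt 8) b.

Lemma Kb_pos b : 0 < Kb b.
Proof. unfold Kb. pose proof (Rpower_pos (sqrt 2) (2 * b)). pose proof (Rpower_pos (sqrt 8) b). lra. Qed.

Lemma small_case X b : 0 <= b -> Rabs X < 1 -> 1 <= Kb b * pw X (- (2 * b)).
Proof.
  intros Hb HX. unfold Kb.
  assert (pw 1 (- (2 * b)) <= pw X (- (2 * b))).
  { apply pw_mono_neg. lra. rewrite Rabs_R1. lra. }
  assert (jbr 1 = sqrt 2) by (unfold jbr; f_equal; ring).
  unfold pw at 1 in H. rewrite H0 in H. rewrite Rpower_Ropp in H.
  pose proof (Rpower_pos (sqrt 2) (2 * b)). pose proof (Rpower_pos (sqrt 8) b).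
  pose proof (pw_pos X (- (2 * b))).
  assert (1 <= Rpower (sqrt 2) (2 * b) * pw X (- (2 * b))).
  { apply Rmult_le_compat_l with (r := Rpower (sqrt 2) (2 * b)) in H; [|lra].
    rewrite Rinv_r in H by lra. lra. }
  nra.
Qed.

Lemma Bsplit (b A X1 X2 : R) : 0 <= b -> A = X1 + X2 ->
  pw (Rabs A * Rabs X1 * Rabs X2) (- b) <= Kb b * (pw X1 (- (2 * b)) + pw X2 (- (2 * b)) + pw A (- (2 * b))).
Proof.
  intros Hb EA.
  pose proof (pw_pos X1 (- (2 * b))) as P1. pose proof (pw_pos X2 (- (2 * b))) as P2. pose proof (pw_pos A (- (2 * b))) as P3.
  pose proof (Kb_pos b) as PK. pose proof (pw_le1 (Rabs A * Rabs X1 * Rabs X2) b Hb) as PL.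
  destruct (Rlt_dec (Rabs X1) 1) as [H1|H1].
  { pose proof (small_case X1 b Hb H1). nra. }
  destruct (Rlt_dec (Rabs X2) 1) as [H2|H2].
  { pose proof (small_case X2 b Hb H2). nra. }
  destruct (Rlt_dec (Rabs A) 1) as [H3|H3].
  { pose proof (small_case A b Hb H3). nra. }
  assert (HP : Rabs X2 ^ 2 / 2 <= Rabs A * Rabs X1 * Rabs X2).
  { assert (Rabs X2 <= Rabs A + Rabs X1).
    { replace X2 with (A + - X1) by lra. rewrite <- (Rabs_Ropp X1). apply Rabs_triang. }
    apply Rnot_lt_le in H1; apply Rnot_lt_le in H2; apply Rnot_lt_le in H3.
    assert (Rabs A + Rabs X1 <= 2 * (Rabs A * Rabs X1)) by nra.
    assert (Rabs X2 <= 2 * (Rabs A * Rabs X1)) by lra.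
    apply Rmult_le_compat_r with (r := Rabs X2) in H4; [|lra]. lra. }
  set (P := Rabs A * Rabs X1 * Rabs X2) in *.
  assert (Hj : jbr X2 * jbr X2 / sqrt 8 <= jbr P).
  { pose proof (jbr_pos X2). pose proof (jbr_pos P).
    assert (E8 : sqrt 8 * sqrt 8 = 8) by (apply sqrt_sqrt; lra).
    assert (0 < sqrt 8) by (apply sqrt_lt_R0; lra).
    assert ((jbr X2 * jbr X2 / sqrt 8) * (jbr X2 * jbr X2 / sqrt 8) <= jbr P * jbr P).
    { rewrite jbr_sq, jbr_sq. replace ((1 + X2 ^ 2) / sqrt 8 * ((1 + X2 ^ 2) / sqrt 8)) with ((1 + X2 ^ 2) ^ 2 / 8)
        by (set (r8 := sqrt 8) in *; replace 8 with (r8 * r8) by exact E8; field; lra).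
      rewrite <- (pow2_abs X2) in *. assert (0 <= Rabs X2 ^ 2) by apply pow2_ge_0.
      assert (0 <= P) by (unfold P; apply Rmult_le_pos; [apply Rmult_le_pos|]; apply Rabs_pos).
      set (x := Rabs X2 ^ 2) in *.
      assert (x / 2 * (x / 2) <= P * P) by (apply Rmult_le_compat; lra).
      assert (0 <= (x - 1) * (x - 1)) by apply Rle_0_sqr.
      assert ((1 + x) * (1 + x) <= 2 + 2 * (x * x)) by lra.
      replace ((1 + x) ^ 2 / 8) with ((1 + x) * (1 + x) / 8) by (simpl; field).
      replace (P ^ 2) with (P * P) by (simpl; ring). lra. }
    assert (0 < jbr X2 * jbr X2 / sqrt 8) by (apply Rdiv_lt_0_compat; nra).
    apply sq_le_pos; auto. }
  assert (pw P (- b) <= Rpower (sqrt 8) b * pw X2 (- (2 * b))).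
  { unfold pw. eapply Rle_trans. apply Rpower_neg_le with (a := jbr X2 * jbr X2 / sqrt 8); auto.
    split; auto. apply Rdiv_lt_0_compat. pose proof (jbr_pos X2); nra. apply sqrt_lt_R0; lra.
    unfold Rdiv. rewrite <- Rpower_mult_distr. rewrite Rpower_sq by apply jbr_pos.
    rewrite Rpower_inv_base by (apply sqrt_lt_R0; lra). rewrite Ropp_involutive.
    replace (2 * - b) with (- (2 * b)) by ring. rewrite Rmult_comm. lra.
    pose proof (jbr_pos X2); nra. apply Rinv_0_lt_compat, sqrt_lt_R0; lra. }
  unfold Kb. pose proof (Rpower_pos (sqrt 2) (2 * b)). pose proof (Rpower_pos (sqrt 8) b). clearbody P.
  set (R2 := Rpower (sqrt 2) (2 * b)) in *. set (R8 := Rpower (sqrt 8) b) in *.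
  assert (R8 * pw X2 (- (2 * b)) <= (R2 + R8) * (pw X1 (- (2 * b)) + pw X2 (- (2 * b)) + pw A (- (2 * b)))).
  { apply Rmult_le_compat; lra. }
  lra.
Qed.


Definition rangeZ (R : nat) : list Z :=
  map (fun i => (Z.of_nat i - Z.of_nat R)%Z) (seq 0 (2 * R + 1)).

Lemma rangeZ_In R x : In x (rangeZ R) <-> (- Z.of_nat R <= x <= Z.of_nat R)%Z.
Proof.
  unfold rangeZ. rewrite in_map_iff. split.
  - intros [i [<- Hi]]. apply in_seq in Hi. lia.
  - intros H. exists (Z.to_nat (x + Z.of_nat R)). split. lia. apply in_seq. lia.
Qed.

Lemma rangeZ_NoDup R : NoDup (rangeZ R).
Proof. unfold rangeZ. apply NoDup_map_in. apply seq_NoDup. intros; lia. Qed.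

Fixpoint box (n R : nat) : list (list Z) :=
  match n with
  | O => [[]]
  | S n' => flat_map (fun x => map (cons x) (box n' R)) (rangeZ R)
  end.

Lemma box_In n R k : In k (box n R) <->
  length k = n /\ Forall (fun z => (- Z.of_nat R <= z <= Z.of_nat R)%Z) k.
Proof.
  revert k. induction n; intros k; simpl.
  - split. intros [<-|[]]. split; auto. intros [H _]. destruct k; [auto|discriminate].
  - rewrite in_flat_map. split.
    + intros [x [Hx Hk]]. apply in_map_iff in Hk as [r [<- Hr]]. apply IHn in Hr as [Hl Hf].
      simpl. split; auto. constructor; auto. apply rangeZ_In; auto.
    + intros [Hl Hf]. destruct k as [|x r]; [discriminate|]. inversion Hf; subst.
      exists x. split. apply rangeZ_In; auto. apply in_map. apply IHn. split; auto.
Qed.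

Lemma box_NoDup n R : NoDup (box n R).
Proof.
  induction n; simpl. constructor; [intros []|constructor].
  generalize (rangeZ_NoDup R). induction (rangeZ R) as [|x l IH]; intros HN; simpl. constructor.
  inversion HN; subst. apply NoDup_app.
  - apply NoDup_map_in; auto. intros a b _ _ E; injection E; auto.
  - apply IH; auto.
  - intros k Hk1 Hk2. apply in_map_iff in Hk1 as [r [<- _]]. apply in_flat_map in Hk2 as [y [Hy Hk]].
    apply in_map_iff in Hk as [r' [E _]]. injection E; intros; subst. contradiction.
Qed.

Definition prodF (n : nat) (F : nat -> Z -> R) (k : list Z) : R :=
  fold_right (fun j acc => F j (nth j k 0%Z) * acc) 1 (seq 0 n).

Lemma fold_map_S (f : nat -> R -> R) a l :
  fold_right f a (map S l) = fold_right (fun j => f (S j)) a l.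
Proof. induction l; simpl; auto. rewrite IHl; auto. Qed.

Lemma prodF_S n F x r : prodF (S n) F (x :: r) = F 0%nat x * prodF n (fun j => F (S j)) r.
Proof. unfold prodF. rewrite <- cons_seq, <- seq_shift. simpl. rewrite fold_map_S. reflexivity. Qed.

Lemma prodF_ext n F G k : (forall j, (j < n)%nat -> F j (nth j k 0%Z) = G j (nth j k 0%Z)) -> prodF n F k = prodF n G k.
Proof.
  intros H. unfold prodF. assert (Hs : forall j, In j (seq 0 n) -> (j < n)%nat) by (intros j Hj; apply in_seq in Hj; lia).
  induction (seq 0 n); simpl; auto. rewrite H, IHl; auto. intros; apply Hs; simpl; auto. apply Hs; simpl; auto.
Qed.

Lemma prodF_pos n F k : (forall j z, 0 < F j z) -> 0 < prodF n F k.
Proof. intros H. unfold prodF. induction (seq 0 n); simpl. lra. apply Rmult_lt_0_compat; auto. Qed.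

Lemma prodF_mult n F G k : prodF n (fun j z => F j z * G j z) k = prodF n F k * prodF n G k.
Proof. unfold prodF. induction (seq 0 n); simpl. ring. rewrite IHl. ring. Qed.

Lemma prodF_inv n F k : (forall j z, F j z <> 0) -> prodF n (fun j z => / F j z) k = / prodF n F k.
Proof. intros H. unfold prodF. induction (seq 0 n); simpl. field. rewrite IHl. field. split; auto.
  clear IHl. induction l; simpl. lra. apply Rmult_integral_contrapositive; split; auto. Qed.

Lemma box_prod n R F :
  lsum (prodF n F) (box n R) = fold_right (fun j acc => lsum (F j) (rangeZ R) * acc) 1 (seq 0 n).
Proof.
  revert F. induction n; intros F.
  - simpl. unfold prodF. simpl. ring.
  - simpl box. rewrite lsum_flat_map.
    rewrite <- cons_seq, <- seq_shift. simpl fold_right. rewrite fold_map_S.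
    specialize (IHn (fun j => F (S j))). simpl in IHn. rewrite <- IHn.
    rewrite Rmult_comm, <- lsum_scal.
    apply lsum_ext. intros x _. rewrite lsum_map.
    rewrite Rmult_comm, <- lsum_scal. apply lsum_ext.
    intros r _. apply prodF_S.
Qed.

Lemma fold_prod_le n (a c : nat -> R) :
  (forall j, (j < n)%nat -> 0 <= a j <= c j) ->
  fold_right (fun j acc => a j * acc) 1 (seq 0 n) <= fold_right (fun j acc => c j * acc) 1 (seq 0 n).
Proof.
  intros H. assert (Hs : forall j, In j (seq 0 n) -> 0 <= a j <= c j) by (intros j Hj; apply in_seq in Hj; apply H; lia).
  clear H. induction (seq 0 n); simpl. lra.
  assert (0 <= fold_right (fun j acc => a j * acc) 1 l).
  { clear IHl. induction l; simpl. lra. apply Rmult_le_pos. apply Hs; simpl; auto. apply IHl. intros; apply Hs; simpl; auto. destruct H; auto. }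
  assert (0 <= a a0 <= c a0) by (apply Hs; simpl; auto).
  apply Rmult_le_compat; try lra. apply IHl. intros; apply Hs; simpl; auto.
Qed.

Lemma vsub_length n k k' : length (vsub n k k') = n.
Proof. unfold vsub. rewrite length_map, length_seq. auto. Qed.

Lemma nth_map_seq {A : Type} (f : nat -> A) n j d : (j < n)%nat -> nth j (map f (seq 0 n)) d = f j.
Proof. intros. rewrite (nth_indep (map f (seq 0 n)) d (f 0%nat)) by (rewrite length_map, length_seq; auto).
  rewrite map_nth, seq_nth; auto. Qed.

Lemma vsub_nth n k k' j : (j < n)%nat -> nth j (vsub n k k') 0%Z = (nth j k 0 - nth j k' 0)%Z.
Proof. intros Hj. unfold vsub. rewrite nth_map_seq; auto. Qed.

Lemma vsub_S n x r y s : vsub (S n) (x :: r) (y :: s) = (x - y)%Z :: vsub n r s.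
Proof. unfold vsub. rewrite <- cons_seq, <- seq_shift. simpl. rewrite map_map. reflexivity. Qed.

Lemma list_eq_nth n (a b : list Z) : length a = n -> length b = n ->
  (forall j, (j < n)%nat -> nth j a 0%Z = nth j b 0%Z) -> a = b.
Proof. intros Ha Hb H. apply nth_ext with 0%Z 0%Z. congruence. intros j Hj. apply H; lia. Qed.

Lemma vsub_inj_r n k a b : length a = n -> length b = n -> vsub n k a = vsub n k b -> a = b.
Proof. intros Ha Hb E. apply (list_eq_nth n); auto. intros j Hj.
  assert (nth j (vsub n k a) 0%Z = nth j (vsub n k b) 0%Z) by (rewrite E; auto).
  rewrite !vsub_nth in H by auto. lia. Qed.

Lemma vsub_inj_l n k a b : length a = n -> length b = n -> vsub n a k = vsub n b k -> a = b.
Proof. intros Ha Hb E. apply (list_eq_nth n); auto. intros j Hj.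
  assert (nth j (vsub n a k) 0%Z = nth j (vsub n b k) 0%Z) by (rewrite E; auto).
  rewrite !vsub_nth in H by auto. lia. Qed.

Definition vadd (n : nat) (k k' : list Z) : list Z :=
  map (fun j => (nth j k 0 + nth j k' 0)%Z) (seq 0 n).

Lemma vadd_vsub n k k' : length k = n -> vadd n (vsub n k k') k' = k.
Proof. intros Hk. apply (list_eq_nth n); auto. unfold vadd. rewrite length_map, length_seq; auto.
  intros j Hj. unfold vadd. rewrite nth_map_seq by auto. rewrite vsub_nth by auto. lia. Qed.

Lemma vsub_nonzero n k k' : length k = n -> length k' = n -> k' <> k -> InDotZN n (vsub n k k').
Proof.
  intros Hk Hk' Hne. split. apply vsub_length.
  destruct (Classical_Prop.classic (exists j, (j < n)%nat /\ nth j (vsub n k k') 0%Z <> 0%Z)) as [H|H]; auto.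
  exfalso. apply Hne. apply (list_eq_nth n); auto. intros j Hj.
  destruct (Z.eq_dec (nth j (vsub n k k') 0%Z) 0%Z) as [E|E].
  - rewrite vsub_nth in E by auto. lia.
  - exfalso; apply H; eauto.
Qed.

Lemma adot_S n alpha x r : adot (S n) alpha (x :: r) = alpha 0%nat * IZR x + adot n (fun j => alpha (S j)) r.
Proof. unfold adot. rewrite <- cons_seq, <- seq_shift. simpl. rewrite fold_map_S. reflexivity. Qed.

Lemma box_cover n (F : list (list Z)) : (forall k, In k F -> length k = n) ->
  exists R, incl F (box n R).
Proof.
  induction F as [|k F IH]; intros H.
  - exists 0%nat. intros x [].
  - destruct IH as [R HR]. intros; apply H; simpl; auto.
    set (R1 := list_max (map Z.to_nat (map Z.abs k))).
    exists (Nat.max R R1). intros x [<-|Hx].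
    + apply box_In. split. apply H; simpl; auto. apply Forall_forall. intros z Hz.
      assert (Z.to_nat (Z.abs z) <= R1)%nat.
      { pose proof (proj1 (list_max_le (map Z.to_nat (map Z.abs k)) R1) (Nat.le_refl _)) as HF.
        rewrite Forall_forall in HF. apply HF. apply in_map. apply in_map. auto. }
      lia.
    + apply HR in Hx. apply box_In in Hx as [Hl Hf]. apply box_In. split; auto.
      eapply Forall_impl; [|exact Hf]. intros z Hz. simpl in Hz. lia.
Qed.


Lemma Rabs_maj2 x : - x <= Rabs x.
Proof. rewrite <- Rabs_Ropp. apply Rle_abs. Qed.

Definition ldec : forall x y : list Z, {x = y} + {x <> y} := list_eq_dec Z.eq_dec.

Lemma FinSub_nil D : FinSub D [].
Proof. split. constructor. intros _ []. Qed.

Lemma FinSub_union D F1 F2 : FinSub D F1 -> FinSub D F2 ->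
  FinSub D (nodup ldec (F1 ++ F2)) /\ incl F1 (nodup ldec (F1 ++ F2)) /\ incl F2 (nodup ldec (F1 ++ F2)).
Proof.
  intros [_ H1] [_ H2]. split; [split|split].
  - apply NoDup_nodup.
  - intros x Hx. apply nodup_In in Hx. apply in_app_or in Hx as [|]; auto.
  - intros x Hx. apply nodup_In. apply in_or_app; auto.
  - intros x Hx. apply nodup_In. apply in_or_app; auto.
Qed.

Lemma nonneg_sum_exists (D : list Z -> Prop) (f : list Z -> R) (M : R) :
  (forall x, D x -> 0 <= f x) -> (forall F, FinSub D F -> lsum f F <= M) ->
  exists s, RHasSum D f s /\ (forall F, FinSub D F -> lsum f F <= s).
Proof.
  intros Hp Hb.
  set (E := fun y => exists F, FinSub D F /\ y = lsum f F).
  assert (HE : bound E) by (exists M; intros y [F [HF ->]]; auto).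
  assert (HE0 : exists y, E y) by (exists 0; exists []; split; [apply FinSub_nil|reflexivity]).
  destruct (completeness E HE HE0) as [s [Hs1 Hs2]].
  exists s. split.
  - intros eps Heps.
    destruct (Classical_Prop.classic (exists F0, FinSub D F0 /\ s - eps < lsum f F0)) as [[F0 [HF0 Hlt]]|Hn].
    + exists F0. split; auto. intros F HF Hi.
      assert (lsum f F0 <= lsum f F).
      { apply lsum_incl_le; auto. apply HF0. intros x Hx. apply Hp. apply HF; auto. }
      assert (lsum f F <= s) by (apply Hs1; exists F; auto).
      apply Rabs_def1; lra.
    + exfalso. assert (s <= s - eps); [|lra]. apply Hs2. intros y [F [HF ->]].
      apply Rnot_lt_le. intros Hlt. apply Hn. exists F; auto.
  - intros F HF. apply Hs1. exists F; auto.
Qed.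

Lemma signed_sum_exists (D : list Z -> Prop) (f g : list Z -> R) (M : R) :
  (forall x, D x -> Rabs (f x) <= g x) -> (forall F, FinSub D F -> lsum g F <= M) ->
  exists s, RHasSum D f s.
Proof.
  intros Hfg Hb.
  set (fp := fun x => (Rabs (f x) + f x) / 2). set (fm := fun x => (Rabs (f x) - f x) / 2).
  assert (Hpp : forall x, D x -> 0 <= fp x) by (intros; unfold fp; pose proof (Rabs_maj2 (f x)); pose proof (Rle_abs (f x)); lra).
  assert (Hmp : forall x, D x -> 0 <= fm x) by (intros; unfold fm; pose proof (Rabs_maj2 (f x)); pose proof (Rle_abs (f x)); lra).
  assert (Hp : forall F, FinSub D F -> lsum fp F <= M).
  { intros F HF. eapply Rle_trans; [|apply Hb; eauto]. apply lsum_le. intros x Hx.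
    assert (D x) by (apply HF; auto). specialize (Hfg x H). unfold fp. pose proof (Rle_abs (f x)). pose proof (Rabs_maj2 (f x)). lra. }
  assert (Hm : forall F, FinSub D F -> lsum fm F <= M).
  { intros F HF. eapply Rle_trans; [|apply Hb; eauto]. apply lsum_le. intros x Hx.
    assert (D x) by (apply HF; auto). specialize (Hfg x H). unfold fm. pose proof (Rle_abs (f x)). pose proof (Rabs_maj2 (f x)). lra. }
  destruct (nonneg_sum_exists D fp M Hpp Hp) as [s1 [Hs1 _]].
  destruct (nonneg_sum_exists D fm M Hmp Hm) as [s2 [Hs2 _]].
  exists (s1 - s2). intros eps Heps.
  destruct (Hs1 (eps / 2)) as [F1 [HF1 H1]]; [lra|].
  destruct (Hs2 (eps / 2)) as [F2 [HF2 H2]]; [lra|].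
  destruct (FinSub_union D F1 F2 HF1 HF2) as [HU [Hi1 Hi2]].
  exists (nodup ldec (F1 ++ F2)). split; auto. intros F HF Hi.
  assert (E : lsum f F = lsum fp F - lsum fm F).
  { rewrite <- lsum_minus. apply lsum_ext. intros; unfold fp, fm; field. }
  rewrite E. specialize (H1 F HF (incl_tran Hi1 Hi)). specialize (H2 F HF (incl_tran Hi2 Hi)).
  apply Rabs_def2 in H1. apply Rabs_def2 in H2. apply Rabs_def1; lra.
Qed.

Lemma RHasSum_approx D f s eps : RHasSum D f s -> 0 < eps -> exists F, FinSub D F /\ Rabs (lsum f F - s) < eps.
Proof. intros H He. destruct (H eps He) as [F0 [HF0 H0]]. exists F0. split; auto. apply H0; auto. apply incl_refl. Qed.

Lemma RHasSum_nonneg D f s : RHasSum D f s -> (forall x, D x -> 0 <= f x) -> 0 <= s.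
Proof.
  intros H Hp. apply Rnot_lt_le. intros Hs.
  destruct (RHasSum_approx D f s (- s) H) as [F [HF HA]]; [lra|].
  assert (0 <= lsum f F) by (apply lsum_nonneg; intros; apply Hp; apply HF; auto).
  apply Rabs_def2 in HA. lra.
Qed.

Lemma CHasSum_approx D f s eps : CHasSum D f s -> 0 < eps ->
  exists F, FinSub D F /\ Rabs (lsum (fun x => fst (f x)) F - fst s) < eps /\ Rabs (lsum (fun x => snd (f x)) F - snd s) < eps.
Proof.
  intros [H1 H2] He. destruct (H1 eps He) as [F1 [HF1 G1]]. destruct (H2 eps He) as [F2 [HF2 G2]].
  destruct (FinSub_union D F1 F2 HF1 HF2) as [HU [Hi1 Hi2]].
  exists (nodup ldec (F1 ++ F2)). split; [auto|split; [apply G1|apply G2]; auto].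
Qed.

Lemma Cmod_nonneg z : 0 <= Cmod z.
Proof. apply sqrt_pos. Qed.

Lemma Cmod_sq z : Cmod z ^ 2 = fst z ^ 2 + snd z ^ 2.
Proof. unfold Cmod. rewrite <- Rsqr_pow2. apply Rsqr_sqrt. nra. Qed.

Lemma Cmod_mul z w : Cmod (Cmul z w) = Cmod z * Cmod w.
Proof. unfold Cmod, Cmul. simpl. rewrite <- sqrt_mult by nra. f_equal. ring. Qed.

Lemma Cmod_fst z : Rabs (fst z) <= Cmod z.
Proof. unfold Cmod. rewrite <- sqrt_Rsqr_abs. apply sqrt_le_1_alt. unfold Rsqr. nra. Qed.
Lemma Cmod_snd z : Rabs (snd z) <= Cmod z.
Proof. unfold Cmod. rewrite <- sqrt_Rsqr_abs. apply sqrt_le_1_alt. unfold Rsqr. nra. Qed.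

Lemma sqrt_le_of_sq x y : 0 <= y -> x <= y * y -> sqrt x <= y.
Proof. intros Hy H. rewrite <- (sqrt_square y) by auto. apply sqrt_le_1_alt. auto. Qed.

Lemma Cmod_triangle a b c d : sqrt ((a + c) ^ 2 + (b + d) ^ 2) <= sqrt (a ^ 2 + b ^ 2) + sqrt (c ^ 2 + d ^ 2).
Proof.
  assert (H1 := sqrt_pos (a ^ 2 + b ^ 2)). assert (H2 := sqrt_pos (c ^ 2 + d ^ 2)).
  apply sqrt_le_of_sq. lra.
  assert (E1 : sqrt (a ^ 2 + b ^ 2) * sqrt (a ^ 2 + b ^ 2) = a ^ 2 + b ^ 2) by (apply sqrt_sqrt; nra).
  assert (E2 : sqrt (c ^ 2 + d ^ 2) * sqrt (c ^ 2 + d ^ 2) = c ^ 2 + d ^ 2) by (apply sqrt_sqrt; nra).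
  assert (a * c + b * d <= sqrt (a ^ 2 + b ^ 2) * sqrt (c ^ 2 + d ^ 2)).
  { rewrite <- sqrt_mult by nra. eapply Rle_trans. apply Rle_abs. rewrite <- sqrt_Rsqr_abs.
    apply sqrt_le_1_alt. unfold Rsqr. assert (0 <= (a * d - b * c) ^ 2) by apply pow2_ge_0. nra. }
  nra.
Qed.

Definition Clsum (f : list Z -> Cpx) (F : list (list Z)) : Cpx :=
  (lsum (fun x => fst (f x)) F, lsum (fun x => snd (f x)) F).

Lemma Cmod_lsum f F : Cmod (Clsum f F) <= lsum (fun x => Cmod (f x)) F.
Proof.
  induction F as [|a F IH].
  - unfold Clsum, Cmod. simpl. replace (0 * (0 * 1) + 0 * (0 * 1)) with 0 by ring. rewrite sqrt_0. lra.
  - unfold Clsum in *. simpl lsum. eapply Rle_trans; [|apply Rplus_le_compat_l; exact IH].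
    unfold Cmod at 1 3. simpl fst. simpl snd. apply Cmod_triangle.
Qed.

Lemma Cmod_approx (s z : Cpx) e : Rabs (fst z - fst s) < e -> Rabs (snd z - snd s) < e -> Cmod s <= Cmod z + 2 * e.
Proof.
  intros H1 H2. destruct s as [s1 s2]; destruct z as [z1 z2]. simpl in *.
  unfold Cmod; simpl fst; simpl snd.
  replace s1 with (z1 + (s1 - z1)) by ring. replace s2 with (z2 + (s2 - z2)) by ring.
  eapply Rle_trans. apply Cmod_triangle. apply Rplus_le_compat_l.
  assert (He : 0 <= e) by (pose proof (Rabs_pos (z1 - s1)); lra).
  apply sqrt_le_of_sq. lra.
  rewrite <- (pow2_abs (s1 - z1)), <- (pow2_abs (s2 - z2)).
  rewrite Rabs_minus_sym in H1, H2.
  pose proof (Rabs_pos (s1 - z1)). pose proof (Rabs_pos (s2 - z2)).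
  simpl. nra.
Qed.


Definition Wt (N : nat) (sigma : nat -> R) (k : list Z) : R :=
  prodF N (fun j z => pw (IZR z) (2 * sigma j)) k.

Lemma Gweight_eq N alpha sigma k : Gweight N alpha sigma 0 k = Wt N sigma k.
Proof. unfold Gweight. rewrite Rmult_0_r, Rpower_zero, Rmult_1_l. reflexivity. Qed.

Lemma Wt_pos N sigma k : 0 < Wt N sigma k.
Proof. apply prodF_pos. intros; apply pw_pos. Qed.

Lemma Wt_ge1 N sigma k : (forall j, (j < N)%nat -> 0 <= sigma j) -> 1 <= Wt N sigma k.
Proof.
  intros H. unfold Wt, prodF.
  assert (Hs : forall j, In j (seq 0 N) -> 0 <= sigma j) by (intros j Hj; apply in_seq in Hj; apply H; lia).
  clear H. induction (seq 0 N); simpl. lra.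
  assert (1 <= pw (IZR (nth a k 0%Z)) (2 * sigma a)).
  { rewrite <- (pw_0 (IZR (nth a k 0%Z))). apply pw_mono_exp. assert (0 <= sigma a) by (apply Hs; simpl; auto). lra. }
  assert (1 <= fold_right (fun j acc => pw (IZR (nth j k 0%Z)) (2 * sigma j) * acc) 1 l) by (apply IHl; intros; apply Hs; simpl; auto).
  nra.
Qed.

Lemma Wt_S n sigma x r : sigma 0%nat = 0 -> Wt (S n) sigma (x :: r) = Wt n (fun j => sigma (S j)) r.
Proof. intros H0. unfold Wt. rewrite prodF_S, H0, Rmult_0_r, pw_0, Rmult_1_l. reflexivity. Qed.

Lemma sqrt_pow2' a : 0 <= a -> sqrt a ^ 2 = a.
Proof. intros. simpl. rewrite Rmult_1_r. apply sqrt_sqrt; auto. Qed.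

Lemma lsum_wCS {A : Type} (t rho : A -> R) L : (forall x, In x L -> 0 < rho x) ->
  (lsum t L) ^ 2 <= lsum rho L * lsum (fun x => t x ^ 2 / rho x) L.
Proof.
  intros H.
  assert (E1 : lsum t L = lsum (fun x => sqrt (rho x) * (t x / sqrt (rho x))) L).
  { apply lsum_ext. intros x Hx. specialize (H x Hx). field. apply Rgt_not_eq, sqrt_lt_R0; auto. }
  rewrite E1. eapply Rle_trans. apply lsum_CS. apply Req_le. f_equal.
  - apply lsum_ext. intros x Hx. apply sqrt_pow2'. left; auto.
  - apply lsum_ext. intros x Hx. specialize (H x Hx). unfold Rdiv. rewrite Rpow_mult_distr.
    rewrite pow_inv, sqrt_pow2' by lra. reflexivity.
Qed.

Lemma NoDup_flat_map_inv {A B : Type} (f : A -> list B) (g : B -> A) L :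
  NoDup L -> (forall x, In x L -> NoDup (f x)) -> (forall x p, In x L -> In p (f x) -> g p = x) ->
  NoDup (flat_map f L).
Proof.
  induction L as [|a L IH]; intros HN Hf Hg; simpl. constructor.
  inversion HN; subst. apply NoDup_app.
  - apply Hf; simpl; auto.
  - apply IH; auto; intros; [apply Hf|apply Hg]; simpl; auto.
  - intros p Hp1 Hp2. apply in_flat_map in Hp2 as [y [Hy Hp2]].
    assert (g p = a) by (apply Hg; simpl; auto). assert (g p = y) by (apply Hg; simpl; auto).
    subst. congruence.
Qed.

Lemma pair_bound N (Pu Pv : list Z -> R) (A B : R) (F : list (list Z)) (G : list Z -> list (list Z)) :
  (forall y, 0 <= Pu y) -> (forall y, 0 <= Pv y) ->
  (forall L, FinSub (InDotZN N) L -> lsum Pu L <= A) ->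
  (forall L, FinSub (InDotZN N) L -> lsum Pv L <= B) ->
  FinSub (InDotZN N) F -> (forall k, In k F -> FinSub (ConvDom N k) (G k)) ->
  lsum (fun k => lsum (fun k' => Pu (vsub N k k') * Pv k') (G k)) F <= A * B.
Proof.
  intros HPu HPv HA HB [HFN HFD] HG.
  set (P := flat_map (fun k => map (fun k' => (vsub N k k', k')) (G k)) F).
  assert (E : lsum (fun k => lsum (fun k' => Pu (vsub N k k') * Pv k') (G k)) F =
              lsum (fun p => Pu (fst p) * Pv (snd p)) P).
  { unfold P. rewrite lsum_flat_map. apply lsum_ext. intros k _. rewrite lsum_map. reflexivity. }
  rewrite E.
  assert (HPN : NoDup P).
  { apply NoDup_flat_map_inv with (g := fun p => vadd N (fst p) (snd p)); auto.
    - intros k Hk. destruct (HG k Hk) as [HN HD]. apply NoDup_map_in; auto.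
      intros a b _ _ Eq. injection Eq; auto.
    - intros k p Hk Hp. apply in_map_iff in Hp as [k' [<- _]]. simpl. apply vadd_vsub. apply HFD; auto. }
  assert (HPD : forall p, In p P -> InDotZN N (fst p) /\ InDotZN N (snd p)).
  { intros p Hp. unfold P in Hp. apply in_flat_map in Hp as [k [Hk Hp]]. apply in_map_iff in Hp as [k' [<- Hk']].
    destruct (HG k Hk) as [_ HD]. destruct (HD k' Hk') as [Hk'1 Hk'2]. simpl. split; auto.
    apply vsub_nonzero; auto. apply HFD; auto. apply Hk'1. }
  set (La := nodup ldec (map fst P)). set (Lb := nodup ldec (map snd P)).
  eapply Rle_trans. apply lsum_incl_le with (M := list_prod La Lb); auto.
  - intros [a b] Hp. apply in_prod_iff. split; apply nodup_In; apply in_map_iff; exists (a, b); auto.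
  - intros; apply Rmult_le_pos; auto.
  - rewrite lsum_prod.
    assert (FinSub (InDotZN N) La).
    { split. apply NoDup_nodup. intros a Ha. apply nodup_In, in_map_iff in Ha as [p [<- Hp]]. apply HPD; auto. }
    assert (FinSub (InDotZN N) Lb).
    { split. apply NoDup_nodup. intros a Ha. apply nodup_In, in_map_iff in Ha as [p [<- Hp]]. apply HPD; auto. }
    apply Rmult_le_compat; auto; apply lsum_nonneg; auto.
Qed.

Lemma lsum_ge_term {A : Type} (f : A -> R) L a : In a L -> (forall x, In x L -> 0 <= f x) -> f a <= lsum f L.
Proof. induction L as [|b L IH]; simpl; intros Ha Hp. contradiction.
  destruct Ha as [<-|Ha]. assert (0 <= lsum f L) by (apply lsum_nonneg; auto). lra.
  assert (0 <= f b) by auto. assert (f a <= lsum f L) by auto. lra. Qed.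

Lemma le_eps x y K : 0 <= K -> (forall e, 0 < e <= 1 -> x <= y + e * K) -> x <= y.
Proof.
  intros HK H. apply Rnot_lt_le. intros Hxy.
  set (e := Rmin 1 ((x - y) / (2 * (K + 1)))).
  assert (0 < e <= 1).
  { unfold e. split. apply Rmin_pos. lra. apply Rdiv_lt_0_compat; lra. apply Rmin_l. }
  specialize (H e H0).
  assert (e <= (x - y) / (2 * (K + 1))) by apply Rmin_r.
  assert (e * K <= (x - y) / (2 * (K + 1)) * K) by (apply Rmult_le_compat_r; lra).
  assert ((x - y) / (2 * (K + 1)) * K < x - y).
  { apply Rmult_lt_reg_r with (2 * (K + 1)). lra.
    replace ((x - y) / (2 * (K + 1)) * K * (2 * (K + 1))) with ((x - y) * K) by (field; lra). nra. }
  lra.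
Qed.

Lemma final_eps N (wt : list Z -> R) (val : list Z -> R) (T : list Z -> list Z -> R) (Cst : R) :
  (forall k, 1 <= wt k) -> (forall k k', 0 <= T k k') -> (forall k, 0 <= val k) ->
  (forall F G, FinSub (InDotZN N) F -> (forall k, In k F -> FinSub (ConvDom N k) (G k)) ->
     lsum (fun k => wt k * (lsum (T k) (G k)) ^ 2) F <= Cst) ->
  (forall k e, InDotZN N k -> 0 < e -> exists G, FinSub (ConvDom N k) G /\ val k <= lsum (T k) G + e) ->
  forall F, FinSub (InDotZN N) F -> lsum (fun k => wt k * val k ^ 2) F <= Cst.
Proof.
  intros Hwt HT Hval Hcore Happ F HF.
  assert (HC0 : 0 <= Cst).
  { eapply Rle_trans; [|apply (Hcore [] (fun _ => []))]. simpl; lra. apply FinSub_nil. intros _ []. }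
  set (Q := sqrt Cst).
  apply le_eps with (K := lsum (fun k => wt k * (2 * Q + 1)) F).
  { apply lsum_nonneg. intros k _. pose proof (Hwt k). pose proof (sqrt_pos Cst). fold Q in H0. nra. }
  intros e He.
  assert (HG : forall k, exists G, InDotZN N k -> FinSub (ConvDom N k) G /\ val k <= lsum (T k) G + e).
  { intros k. destruct (Classical_Prop.classic (InDotZN N k)) as [Hk|Hk].
    - destruct (Happ k e Hk (proj1 He)) as [G HG]. exists G; auto.
    - exists []. intros; contradiction. }
  set (Gf := fun k => proj1_sig (constructive_indefinite_description _ (HG k))).
  assert (HGf : forall k, InDotZN N k -> FinSub (ConvDom N k) (Gf k) /\ val k <= lsum (T k) (Gf k) + e).
  { intros k Hk. unfold Gf. destruct (constructive_indefinite_description _ (HG k)) as [G HG']. simpl. auto. }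
  assert (Hc : lsum (fun k => wt k * (lsum (T k) (Gf k)) ^ 2) F <= Cst).
  { apply Hcore; auto. intros k Hk. apply HGf. apply HF; auto. }
  assert (Hsingle : forall k, In k F -> lsum (T k) (Gf k) <= Q).
  { intros k Hk. assert (0 <= lsum (T k) (Gf k)) by (apply lsum_nonneg; auto).
    assert (wt k * (lsum (T k) (Gf k)) ^ 2 <= Cst).
    { eapply Rle_trans; [|exact Hc]. apply lsum_ge_term with (f := fun k => wt k * (lsum (T k) (Gf k)) ^ 2); auto.
      intros y _. pose proof (Hwt y). pose proof (pow2_ge_0 (lsum (T y) (Gf y))). nra. }
    assert ((lsum (T k) (Gf k)) ^ 2 <= Cst) by (pose proof (Hwt k); pose proof (pow2_ge_0 (lsum (T k) (Gf k))); nra).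
    unfold Q. rewrite <- (sqrt_pow2 (lsum (T k) (Gf k))) by auto. apply sqrt_le_1_alt; auto. }
  eapply Rle_trans with (lsum (fun k => wt k * (lsum (T k) (Gf k)) ^ 2 + e * (wt k * (2 * Q + 1))) F).
  - apply lsum_le. intros k Hk. destruct (HGf k (proj2 HF k Hk)) as [_ Hv].
    specialize (Hsingle k Hk). pose proof (Hval k). pose proof (Hwt k).
    assert (0 <= lsum (T k) (Gf k)) by (apply lsum_nonneg; auto).
    assert (val k ^ 2 <= (lsum (T k) (Gf k) + e) ^ 2) by (simpl; nra).
    assert ((lsum (T k) (Gf k) + e) ^ 2 <= lsum (T k) (Gf k) ^ 2 + e * (2 * Q + 1)) by (simpl; nra).
    nra.
  - rewrite lsum_plus, lsum_scal. lra.
Qed.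

Lemma prodF_ext2 n F G a b : (forall j, (j < n)%nat -> F j (nth j a 0%Z) = G j (nth j b 0%Z)) -> prodF n F a = prodF n G b.
Proof.
  intros H. unfold prodF. assert (Hs : forall j, In j (seq 0 n) -> (j < n)%nat) by (intros j Hj; apply in_seq in Hj; lia).
  induction (seq 0 n); simpl; auto. rewrite H, IHl; auto. intros; apply Hs; simpl; auto. apply Hs; simpl; auto.
Qed.

Definition ratioF (sigma : nat -> R) (k : list Z) (j : nat) (z : Z) : R :=
  pw (IZR (nth j k 0%Z)) (2 * sigma j) / (pw (IZR (nth j k 0%Z) - IZR z) (2 * sigma j) * pw (IZR z) (2 * sigma j)).

Lemma m2_prod N sigma k k' : length k = N ->
  Wt N sigma k / (Wt N sigma (vsub N k k') * Wt N sigma k') = prodF N (ratioF sigma k) k'.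
Proof.
  intros Hk. unfold ratioF, Rdiv.
  rewrite prodF_mult, prodF_inv, prodF_mult.
  - f_equal. f_equal. f_equal. unfold Wt. apply prodF_ext2. intros j Hj. rewrite vsub_nth, minus_IZR; auto.
  - intros; apply Rgt_not_eq, Rmult_lt_0_compat; apply pw_pos.
Qed.

Lemma sum1D_fun (t : R) (sf : nat -> R) : t <> 0 ->
  exists Cf : nat -> R, forall j, 1 < sf j -> forall c L, NoDup L -> lsum (fun x => pw (t * IZR x + c) (- sf j)) L <= Cf j.
Proof.
  intros Ht.
  assert (H : forall j, exists C, 1 < sf j -> forall c L, NoDup L -> lsum (fun x => pw (t * IZR x + c) (- sf j)) L <= C).
  { intros j. destruct (Rlt_dec 1 (sf j)) as [H|H].
    - destruct (sum1D t (sf j) Ht H) as [C HC]. exists C; auto.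
    - exists 0. intros; contradiction. }
  exists (fun j => proj1_sig (constructive_indefinite_description _ (H j))).
  intros j. destruct (constructive_indefinite_description _ (H j)) as [C HC]. simpl. auto.
Qed.

Lemma msum_i N sigma : (forall j, (j < N)%nat -> sigma j > 1/2) ->
  exists Cm, 0 <= Cm /\ forall k R, length k = N ->
    lsum (fun k' => Wt N sigma k / (Wt N sigma (vsub N k k') * Wt N sigma k')) (box N R) <= Cm.
Proof.
  intros Hs.
  destruct (sum1D_fun (-1) (fun j => 2 * sigma j)) as [Ca HCa]; [lra|].
  destruct (sum1D_fun 1 (fun j => 2 * sigma j)) as [Cb HCb]; [lra|].
  set (c := fun j => Rpower 2 (2 * sigma j) * (Ca j + Cb j)).
  exists (Rmax 0 (fold_right (fun j acc => c j * acc) 1 (seq 0 N))). split.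
  - apply Rmax_l.
  - intros k R Hk. eapply Rle_trans; [|apply Rmax_r].
    rewrite (lsum_ext _ (prodF N (ratioF sigma k))).
    2:{ intros k' Hk'. apply m2_prod; auto. }
    rewrite box_prod. apply fold_prod_le. intros j Hj. split.
    + apply lsum_nonneg. intros z _. unfold ratioF. apply Rlt_le, Rdiv_lt_0_compat. apply pw_pos.
      apply Rmult_lt_0_compat; apply pw_pos.
    + unfold c. eapply Rle_trans.
      * apply lsum_le with (g := fun z => Rpower 2 (2 * sigma j) * (pw (-1 * IZR z + IZR (nth j k 0%Z)) (- (2 * sigma j)) + pw (1 * IZR z + 0) (- (2 * sigma j)))).
        intros z _. unfold ratioF.
        pose proof (ratio_bound (IZR (nth j k 0%Z) - IZR z) (IZR z) (2 * sigma j)) as HR.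
        replace (IZR (nth j k 0%Z) - IZR z + IZR z) with (IZR (nth j k 0%Z)) in HR by ring.
        replace (-1 * IZR z + IZR (nth j k 0%Z)) with (IZR (nth j k 0%Z) - IZR z) by ring.
        replace (1 * IZR z + 0) with (IZR z) by ring.
        apply HR. specialize (Hs j Hj). lra.
      * rewrite lsum_scal, lsum_plus. apply Rmult_le_compat_l. left; apply Rpower_pos.
        specialize (Hs j Hj). apply Rplus_le_compat.
        apply HCa. lra. apply rangeZ_NoDup. apply HCb. lra. apply rangeZ_NoDup.
Qed.

Lemma SqNorm_Wt N alpha sigma (u : list Z -> Cpx) A :
  SqNormLe N alpha sigma 0 (fun k => Cmod (u k)) A ->
  forall L, FinSub (InDotZN N) L -> lsum (fun y => Wt N sigma y * Cmod (u y) ^ 2) L <= A.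
Proof. intros H L HL. rewrite <- (lsum_ext (fun k => Gweight N alpha sigma 0 k * Cmod (u k) ^ 2)).
  apply H; auto. intros; rewrite Gweight_eq; auto. Qed.

Lemma G_in_box N k (G : list (list Z)) : FinSub (ConvDom N k) G -> exists R, incl G (box N R).
Proof. intros [_ HG]. apply box_cover. intros k' Hk'. apply HG; auto. Qed.

Lemma perk_CS N sigma (X : list Z -> list Z -> R) (T : list Z -> list Z -> R) (Pu Pv : list Z -> R) k G :
  (forall k', In k' G -> 0 < X k k') ->
  (forall k', In k' G -> T k k' ^ 2 / (X k k' * (Wt N sigma k / (Wt N sigma (vsub N k k') * Wt N sigma k'))) * Wt N sigma k
        = Pu (vsub N k k') * Pv k') ->
  Wt N sigma k * (lsum (T k) G) ^ 2 <=
    lsum (fun k' => X k k' * (Wt N sigma k / (Wt N sigma (vsub N k k') * Wt N sigma k'))) G *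
    lsum (fun k' => Pu (vsub N k k') * Pv k') G.
Proof.
  intros HX HT.
  set (rho := fun k' => X k k' * (Wt N sigma k / (Wt N sigma (vsub N k k') * Wt N sigma k'))).
  assert (Hr : forall k', In k' G -> 0 < rho k').
  { intros k' Hk'. unfold rho. apply Rmult_lt_0_compat; auto. apply Rdiv_lt_0_compat. apply Wt_pos.
    apply Rmult_lt_0_compat; apply Wt_pos. }
  pose proof (lsum_wCS (T k) rho G Hr) as HC.
  pose proof (Wt_pos N sigma k).
  apply Rmult_le_compat_l with (r := Wt N sigma k) in HC; [|lra].
  eapply Rle_trans. rewrite Rmult_comm. exact (Rle_trans _ _ _ (Req_le _ _ (Rmult_comm _ _)) HC).
  rewrite <- Rmult_assoc, (Rmult_comm (Wt N sigma k)), Rmult_assoc, <- lsum_scal.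
  apply Rmult_le_compat_l. apply lsum_nonneg; intros; left; auto.
  apply Req_le. apply lsum_ext. intros k' Hk'. rewrite <- HT by auto. unfold rho. ring.
Qed.

Lemma T_ident N sigma (Cu Cv X : R) k k' : X <> 0 ->
  (X * (Cu * Cv)) ^ 2 / (X ^ 2 * (Wt N sigma k / (Wt N sigma (vsub N k k') * Wt N sigma k'))) * Wt N sigma k
  = (Wt N sigma (vsub N k k') * Cu ^ 2) * (Wt N sigma k' * Cv ^ 2).
Proof.
  intros HX. pose proof (Wt_pos N sigma k). pose proof (Wt_pos N sigma (vsub N k k')). pose proof (Wt_pos N sigma k').
  field. repeat split; lra.
Qed.

Lemma core_i N alpha sigma : (forall j, (j < N)%nat -> sigma j > 1/2) ->
  exists Cm, 0 <= Cm /\ forall (u v : list Z -> Cpx) A B,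
    SqNormLe N alpha sigma 0 (fun k => Cmod (u k)) A ->
    SqNormLe N alpha sigma 0 (fun k => Cmod (v k)) B ->
    forall F G, FinSub (InDotZN N) F -> (forall k, In k F -> FinSub (ConvDom N k) (G k)) ->
    lsum (fun k => Wt N sigma k * (lsum (fun k' => Cmod (u (vsub N k k')) * Cmod (v k')) (G k)) ^ 2) F <= Cm * (A * B).
Proof.
  intros Hs. destruct (msum_i N sigma Hs) as [Cm [HCm0 HCm]]. exists Cm. split; auto.
  intros u v A B Hu Hv F G HF HG.
  set (Pu := fun y => Wt N sigma y * Cmod (u y) ^ 2). set (Pv := fun y => Wt N sigma y * Cmod (v y) ^ 2).
  eapply Rle_trans with (lsum (fun k => Cm * lsum (fun k' => Pu (vsub N k k') * Pv k') (G k)) F).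
  - apply lsum_le. intros k Hk.
    replace (lsum (fun k' => Cmod (u (vsub N k k')) * Cmod (v k')) (G k)) with (lsum (fun k' => 1 * (Cmod (u (vsub N k k')) * Cmod (v k'))) (G k)) by (apply lsum_ext; intros; ring).
    eapply Rle_trans.
    + apply (perk_CS N sigma (fun _ _ => 1 ^ 2) (fun k k' => 1 * (Cmod (u (vsub N k k')) * Cmod (v k'))) Pu Pv k (G k)).
      intros; simpl; lra.
      intros k' _. unfold Pu, Pv. apply T_ident. lra.
    + apply Rmult_le_compat_r.
      * apply lsum_nonneg. intros; unfold Pu, Pv. apply Rmult_le_pos; apply Rmult_le_pos; try (left; apply Wt_pos); apply pow2_ge_0.
      * destruct (G_in_box N k (G k) (HG k Hk)) as [R HR].
        eapply Rle_trans. apply lsum_incl_le with (M := box N R); auto. apply (HG k Hk).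
        intros k' _. rewrite pow1, Rmult_1_l. apply Rlt_le, Rdiv_lt_0_compat. apply Wt_pos. apply Rmult_lt_0_compat; apply Wt_pos.
        eapply Rle_trans; [|apply (HCm k R)]. apply Req_le. apply lsum_ext. intros. rewrite pow1; ring.
        apply HF; auto.
  - rewrite lsum_scal. apply Rmult_le_compat_l; auto.
    apply pair_bound with (N := N); auto.
    + intros; unfold Pu; apply Rmult_le_pos; [left; apply Wt_pos|apply pow2_ge_0].
    + intros; unfold Pv; apply Rmult_le_pos; [left; apply Wt_pos|apply pow2_ge_0].
    + apply (SqNorm_Wt N alpha sigma u A Hu).
    + apply (SqNorm_Wt N alpha sigma v B Hv).
Qed.

Lemma SqNorm_nonneg N alpha sigma g A : SqNormLe N alpha sigma 0 g A -> 0 <= A.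
Proof. intros H. specialize (H [] (FinSub_nil _)). simpl in H. lra. Qed.

Lemma conv_bound N alpha sigma (u v : list Z -> Cpx) A B k :
  (forall j, (j < N)%nat -> 0 <= sigma j) ->
  SqNormLe N alpha sigma 0 (fun k => Cmod (u k)) A ->
  SqNormLe N alpha sigma 0 (fun k => Cmod (v k)) B ->
  InDotZN N k ->
  forall G, FinSub (ConvDom N k) G -> lsum (fun k' => Cmod (u (vsub N k k')) * Cmod (v k')) G <= (A + B) / 2.
Proof.
  intros Hs Hu Hv Hk G [HGN HGD].
  apply Rle_trans with (lsum (fun k' => (Wt N sigma (vsub N k k') * Cmod (u (vsub N k k')) ^ 2 + Wt N sigma k' * Cmod (v k') ^ 2) / 2) G).
  - apply lsum_le. intros k' _. pose proof (Wt_ge1 N sigma (vsub N k k') Hs). pose proof (Wt_ge1 N sigma k' Hs).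
    pose proof (pow2_ge_0 (Cmod (u (vsub N k k')))). pose proof (pow2_ge_0 (Cmod (v k'))).
    pose proof (pow2_ge_0 (Cmod (u (vsub N k k')) - Cmod (v k'))). simpl in *. nra.
  - unfold Rdiv. rewrite (lsum_ext _ (fun k' => / 2 * (Wt N sigma (vsub N k k') * Cmod (u (vsub N k k')) ^ 2 + Wt N sigma k' * Cmod (v k') ^ 2))) by (intros; ring).
    rewrite lsum_scal, lsum_plus.
    assert (lsum (fun k' => Wt N sigma (vsub N k k') * Cmod (u (vsub N k k')) ^ 2) G <= A).
    { rewrite <- (lsum_map (fun y => Wt N sigma y * Cmod (u y) ^ 2) (vsub N k)).
      apply (SqNorm_Wt N alpha sigma u A Hu). split.
      - apply NoDup_map_in; auto. intros a b Ha Hb E. apply (vsub_inj_r N k); auto.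
        apply HGD; auto. apply HGD; auto.
      - intros y Hy. apply in_map_iff in Hy as [k' [<- Hk']]. destruct (HGD k' Hk') as [Hk'1 Hk'2].
        apply vsub_nonzero; auto. apply Hk. apply Hk'1. }
    assert (lsum (fun k' => Wt N sigma k' * Cmod (v k') ^ 2) G <= B).
    { apply (SqNorm_Wt N alpha sigma v B Hv). split; auto. intros; apply HGD; auto. }
    lra.
Qed.

Lemma part_i N alpha : forall sigma : nat -> R,
     (forall j, (j < N)%nat -> sigma j > 1/2) ->
     exists Cst, 0 < Cst /\
       forall (u v : list Z -> Cpx) (A B : R),
         SqNormLe N alpha sigma 0 (fun k => Cmod (u k)) A ->
         SqNormLe N alpha sigma 0 (fun k => Cmod (v k)) B ->
         (exists w, IsProduct N u v w) /\
         (forall w, IsProduct N u v w ->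
            SqNormLe N alpha sigma 0 (fun k => Cmod (w k)) (Cst ^ 2 * A * B)).
Proof.
  intros sigma Hs. destruct (core_i N alpha sigma Hs) as [Cm [HCm0 HCm]].
  assert (Hs0 : forall j, (j < N)%nat -> 0 <= sigma j) by (intros j Hj; specialize (Hs j Hj); lra).
  exists (sqrt (Cm + 1)). split. apply sqrt_lt_R0; lra.
  intros u v A B Hu Hv. pose proof (SqNorm_nonneg _ _ _ _ _ Hu) as HA. pose proof (SqNorm_nonneg _ _ _ _ _ Hv) as HB.
  split.
  - assert (Hex : forall k, exists s : Cpx, InDotZN N k -> CHasSum (ConvDom N k) (fun k' => Cmul (u (vsub N k k')) (v k')) s).
    { intros k. destruct (Classical_Prop.classic (InDotZN N k)) as [Hk|Hk]; [|exists (0, 0); intros; contradiction].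
      pose proof (conv_bound N alpha sigma u v A B k Hs0 Hu Hv Hk) as Hb.
      destruct (signed_sum_exists (ConvDom N k) (fun k' => fst (Cmul (u (vsub N k k')) (v k')))
                  (fun k' => Cmod (u (vsub N k k')) * Cmod (v k')) ((A + B) / 2)) as [s1 Hs1]; auto.
      { intros k' _. rewrite <- Cmod_mul. apply Cmod_fst. }
      destruct (signed_sum_exists (ConvDom N k) (fun k' => snd (Cmul (u (vsub N k k')) (v k')))
                  (fun k' => Cmod (u (vsub N k k')) * Cmod (v k')) ((A + B) / 2)) as [s2 Hs2]; auto.
      { intros k' _. rewrite <- Cmod_mul. apply Cmod_snd. }
      exists (s1, s2). intros _. split; auto. }
    exists (fun k => proj1_sig (constructive_indefinite_description _ (Hex k))).
    intros k Hk. destruct (constructive_indefinite_description _ (Hex k)) as [s Hs']. simpl. auto.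
  - intros w Hw F HF.
    rewrite (lsum_ext _ (fun k => Wt N sigma k * Cmod (w k) ^ 2)) by (intros; rewrite Gweight_eq; auto).
    eapply Rle_trans.
    + refine (final_eps N (Wt N sigma) (fun k => Cmod (w k)) (fun k k' => Cmod (u (vsub N k k')) * Cmod (v k')) (Cm * (A * B)) _ _ _ _ _ F HF).
      * intros; apply Wt_ge1; auto.
      * intros; apply Rmult_le_pos; apply Cmod_nonneg.
      * intros; apply Cmod_nonneg.
      * intros F' G HF' HG. apply HCm; auto.
      * intros k e Hk He. destruct (CHasSum_approx _ _ _ (e / 2) (Hw k Hk)) as [G [HG [H1 H2]]]; [lra|].
        exists G. split; auto.
        pose proof (Cmod_approx (w k) (Clsum (fun k' => Cmul (u (vsub N k k')) (v k')) G) (e / 2) H1 H2).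
        pose proof (Cmod_lsum (fun k' => Cmul (u (vsub N k k')) (v k')) G).
        rewrite (lsum_ext _ (fun k' => Cmod (u (vsub N k k')) * Cmod (v k'))) in H0 by (intros; apply Cmod_mul).
        lra.
    + rewrite sqrt_pow2' by lra. assert (0 <= A * B) by nra. nra.
Qed.

Lemma adot_vsub N alpha k k' : adot N alpha (vsub N k k') = adot N alpha k - adot N alpha k'.
Proof.
  unfold adot. assert (Hs : forall j, In j (seq 0 N) -> (j < N)%nat) by (intros j Hj; apply in_seq in Hj; lia).
  induction (seq 0 N); simpl. ring.
  rewrite IHl by (intros; apply Hs; simpl; auto). rewrite vsub_nth by (apply Hs; simpl; auto).
  rewrite minus_IZR. ring.
Qed.

Lemma lsum_box_S (g : list Z -> R) n R :
  lsum g (box (S n) R) = lsum (fun x => lsum (fun s => g (x :: s)) (box n R)) (rangeZ R).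
Proof. simpl box. rewrite lsum_flat_map. apply lsum_ext. intros. rewrite lsum_map. reflexivity. Qed.

Lemma pw_sq y b : pw y (- b) ^ 2 = pw y (- (2 * b)).
Proof. unfold pw. simpl. rewrite Rmult_1_r, <- Rpower_plus. f_equal. ring. Qed.

Lemma m2_S n sigma k0 r x s : sigma 0%nat = 0 ->
  Wt (S n) sigma (k0 :: r) / (Wt (S n) sigma (vsub (S n) (k0 :: r) (x :: s)) * Wt (S n) sigma (x :: s)) =
  Wt n (fun j => sigma (S j)) r / (Wt n (fun j => sigma (S j)) (vsub n r s) * Wt n (fun j => sigma (S j)) s).
Proof. intros H0. rewrite vsub_S, !Wt_S by auto. reflexivity. Qed.

Lemma msum_ii n alpha sigma beta : sigma 0%nat = 0 -> (forall j, (j < n)%nat -> sigma (S j) > 1/2) ->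
  alpha 0%nat <> 0 -> beta > 1/4 ->
  exists C, 0 <= C /\ forall k R, length k = S n ->
    lsum (fun k' => pw (adot (S n) alpha k') (- (2 * beta)) ^ 2 *
       (Wt (S n) sigma k / (Wt (S n) sigma (vsub (S n) k k') * Wt (S n) sigma k'))) (box (S n) R) <= C /\
    lsum (fun k' => pw (adot (S n) alpha (vsub (S n) k k')) (- (2 * beta)) ^ 2 *
       (Wt (S n) sigma k / (Wt (S n) sigma (vsub (S n) k k') * Wt (S n) sigma k'))) (box (S n) R) <= C.
Proof.
  intros H0 Hs Ha Hb.
  destruct (msum_i n (fun j => sigma (S j)) Hs) as [Cm [HCm0 HCm]].
  destruct (sum1D (alpha 0%nat) (2 * (2 * beta)) Ha) as [C1 HC1]; [lra|].
  destruct (sum1D (- alpha 0%nat) (2 * (2 * beta))) as [C2 HC2]; [lra|lra|].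
  assert (HC1p : 0 <= C1) by (specialize (HC1 0 [] (NoDup_nil _)); simpl in HC1; lra).
  assert (HC2p : 0 <= C2) by (specialize (HC2 0 [] (NoDup_nil _)); simpl in HC2; lra).
  exists ((C1 + C2) * Cm). split. apply Rmult_le_pos; lra.
  intros k R Hk. destruct k as [|k0 r]; [discriminate|]. simpl in Hk. injection Hk as Hk.
  set (M := fun s => Wt n (fun j => sigma (S j)) r / (Wt n (fun j => sigma (S j)) (vsub n r s) * Wt n (fun j => sigma (S j)) s)).
  assert (HM : forall s, 0 <= M s).
  { intros; unfold M; apply Rlt_le, Rdiv_lt_0_compat. apply Wt_pos. apply Rmult_lt_0_compat; apply Wt_pos. }
  assert (HMs : lsum M (box n R) <= Cm) by (apply HCm; auto).
  split.
  - rewrite lsum_box_S.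
    rewrite (lsum_ext _ (fun x => lsum (fun s => pw (alpha 0%nat * IZR x + adot n (fun j => alpha (S j)) s) (- (2 * (2 * beta))) * M s) (box n R))).
    2:{ intros x _. apply lsum_ext. intros s _. rewrite m2_S by auto. rewrite adot_S, pw_sq. reflexivity. }
    rewrite lsum_swap.
    apply Rle_trans with (lsum (fun s => C1 * M s) (box n R)).
    + apply lsum_le. intros s _. rewrite (lsum_ext _ (fun x => M s * pw (alpha 0%nat * IZR x + adot n (fun j => alpha (S j)) s) (- (2 * (2 * beta))))) by (intros; ring).
      rewrite lsum_scal. rewrite Rmult_comm. apply Rmult_le_compat_r; auto. apply HC1. apply rangeZ_NoDup.
    + rewrite lsum_scal. assert (C1 * lsum M (box n R) <= C1 * Cm) by (apply Rmult_le_compat_l; auto).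
      assert (C1 * Cm <= (C1 + C2) * Cm) by (apply Rmult_le_compat_r; lra). lra.
  - rewrite lsum_box_S.
    rewrite (lsum_ext _ (fun x => lsum (fun s => pw (- alpha 0%nat * IZR x + (alpha 0%nat * IZR k0 + adot n (fun j => alpha (S j)) (vsub n r s))) (- (2 * (2 * beta))) * M s) (box n R))).
    2:{ intros x _. apply lsum_ext. intros s _. rewrite m2_S by auto. rewrite vsub_S, adot_S, pw_sq, minus_IZR.
        unfold M. f_equal. f_equal. ring. }
    rewrite lsum_swap.
    apply Rle_trans with (lsum (fun s => C2 * M s) (box n R)).
    + apply lsum_le. intros s _. rewrite (lsum_ext _ (fun x => M s * pw (- alpha 0%nat * IZR x + (alpha 0%nat * IZR k0 + adot n (fun j => alpha (S j)) (vsub n r s))) (- (2 * (2 * beta))))) by (intros; ring).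
      rewrite lsum_scal. rewrite Rmult_comm. apply Rmult_le_compat_r; auto. apply HC2. apply rangeZ_NoDup.
    + rewrite lsum_scal. assert (C2 * lsum M (box n R) <= C2 * Cm) by (apply Rmult_le_compat_l; auto).
      assert (C2 * Cm <= (C1 + C2) * Cm) by (apply Rmult_le_compat_r; lra). lra.
Qed.


Definition indb (N : nat) (y : list Z) : bool :=
  if excluded_middle_informative (InDotZN N y) then true else false.

Lemma lsum_if_filter {A : Type} (p : A -> bool) (f : A -> R) L :
  lsum (fun y => if p y then f y else 0) L = lsum f (filter p L).
Proof. induction L; simpl; auto. destruct (p a); simpl; rewrite IHL; ring. Qed.

Lemma trunc_bound N (P : list Z -> R) A :
  (forall L, FinSub (InDotZN N) L -> lsum P L <= A) ->
  forall L, NoDup L -> lsum (fun y => if indb N y then P y else 0) L <= A.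
Proof.
  intros H L HL. rewrite lsum_if_filter. apply H. split. apply NoDup_filter; auto.
  intros y Hy. apply filter_In in Hy as [_ Hy]. unfold indb in Hy.
  destruct (excluded_middle_informative (InDotZN N y)); auto. discriminate.
Qed.

Section T3.
Variables (n : nat) (sigma : nat -> R) (u v : list Z -> Cpx).
Let sg := fun j => sigma (S j).
Definition Cut (y : list Z) : R := if indb (S n) y then Cmod (u y) else 0.
Definition Cvt (y : list Z) : R := if indb (S n) y then Cmod (v y) else 0.
Definition Ut2 (y : list Z) : R := if indb (S n) y then Wt (S n) sigma y * Cmod (u y) ^ 2 else 0.
Definition Vt2 (y : list Z) : R := if indb (S n) y then Wt (S n) sigma y * Cmod (v y) ^ 2 else 0.
Definition LU (R2 : nat) (r' : list Z) : R := lsum (fun y => Ut2 (y :: r')) (rangeZ R2).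
Definition LV (rb : nat) (s : list Z) : R := lsum (fun x => Vt2 (x :: s)) (rangeZ rb).

Lemma Cut_nonneg y : 0 <= Cut y. Proof. unfold Cut; destruct (indb _ y); [apply Cmod_nonneg|lra]. Qed.
Lemma Cvt_nonneg y : 0 <= Cvt y. Proof. unfold Cvt; destruct (indb _ y); [apply Cmod_nonneg|lra]. Qed.
Lemma Ut2_eq y : Ut2 y = Wt (S n) sigma y * Cut y ^ 2.
Proof. unfold Ut2, Cut. destruct (indb _ y); simpl; ring. Qed.
Lemma Vt2_eq y : Vt2 y = Wt (S n) sigma y * Cvt y ^ 2.
Proof. unfold Vt2, Cvt. destruct (indb _ y); simpl; ring. Qed.
Lemma Ut2_nonneg y : 0 <= Ut2 y.
Proof. rewrite Ut2_eq. apply Rmult_le_pos. left; apply Wt_pos. apply pow2_ge_0. Qed.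
Lemma Vt2_nonneg y : 0 <= Vt2 y.
Proof. rewrite Vt2_eq. apply Rmult_le_pos. left; apply Wt_pos. apply pow2_ge_0. Qed.

Lemma Cut_on y : InDotZN (S n) y -> Cut y = Cmod (u y).
Proof. intros H. unfold Cut, indb. destruct (excluded_middle_informative _); tauto. Qed.
Lemma Cvt_on y : InDotZN (S n) y -> Cvt y = Cmod (v y).
Proof. intros H. unfold Cvt, indb. destruct (excluded_middle_informative _); tauto. Qed.

Hypothesis H0 : sigma 0%nat = 0.

Lemma L1 (Cm : R) k0 r G rb R2 :
  (forall k, length k = n -> forall rb, lsum (fun s => Wt n sg k / (Wt n sg (vsub n k s) * Wt n sg s)) (box n rb) <= Cm) ->
  length r = n -> InDotZN (S n) (k0 :: r) -> FinSub (ConvDom (S n) (k0 :: r)) G -> incl G (box (S n) rb) ->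
  (Z.abs k0 + Z.of_nat rb <= Z.of_nat R2)%Z ->
  Wt n sg r * (lsum (fun k' => Cmod (u (vsub (S n) (k0 :: r) k')) * Cmod (v k')) G) ^ 2 <=
    Cm * lsum (fun s => LU R2 (vsub n r s) * LV rb s) (box n rb).
Proof.
  intros HCm Hr Hk [HGN HGD] HGR HR2.
  set (S0 := lsum (fun k' => Cut (vsub (S n) (k0 :: r) k') * Cvt k') (box (S n) rb)).
  assert (Ha : lsum (fun k' => Cmod (u (vsub (S n) (k0 :: r) k')) * Cmod (v k')) G <= S0).
  { unfold S0. rewrite (lsum_ext _ (fun k' => Cut (vsub (S n) (k0 :: r) k') * Cvt k') G).
    - apply lsum_incl_le; auto. intros; apply Rmult_le_pos; [apply Cut_nonneg|apply Cvt_nonneg].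
    - intros k' Hk'. destruct (HGD k' Hk') as [Hk'1 Hk'2]. rewrite Cut_on, Cvt_on; auto.
      apply vsub_nonzero; auto. apply Hk. apply Hk'1. }
  assert (Ha0 : 0 <= lsum (fun k' => Cmod (u (vsub (S n) (k0 :: r) k')) * Cmod (v k')) G).
  { apply lsum_nonneg; intros; apply Rmult_le_pos; apply Cmod_nonneg. }
  set (Tsum := fun s => lsum (fun x => Cut ((k0 - x)%Z :: vsub n r s) * Cvt (x :: s)) (rangeZ rb)).
  assert (Hb : S0 = lsum Tsum (box n rb)).
  { unfold S0, Tsum. rewrite lsum_box_S, lsum_swap. apply lsum_ext. intros s _. apply lsum_ext. intros x _.
    rewrite vsub_S. reflexivity. }
  set (M := fun s => Wt n sg r / (Wt n sg (vsub n r s) * Wt n sg s)).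
  assert (HM : forall s, 0 < M s).
  { intros; unfold M; apply Rdiv_lt_0_compat. apply Wt_pos. apply Rmult_lt_0_compat; apply Wt_pos. }
  assert (Hc := lsum_wCS Tsum M (box n rb) (fun s _ => HM s)).
  assert (Hd : forall s, In s (box n rb) -> Wt n sg r * (Tsum s ^ 2 / M s) <= LU R2 (vsub n r s) * LV rb s).
  { intros s Hs. apply box_In in Hs as [Hsl _].
    assert (HCS := lsum_CS (fun x => Cut ((k0 - x)%Z :: vsub n r s)) (fun x => Cvt (x :: s)) (rangeZ rb)).
    fold (Tsum s) in HCS.
    assert (E : Wt n sg r * (Tsum s ^ 2 / M s) = Wt n sg (vsub n r s) * Wt n sg s * Tsum s ^ 2).
    { unfold M. pose proof (Wt_pos n sg r). pose proof (Wt_pos n sg (vsub n r s)). pose proof (Wt_pos n sg s).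
      field. repeat split; lra. }
    rewrite E.
    assert (HLU : Wt n sg (vsub n r s) * lsum (fun x => Cut ((k0 - x)%Z :: vsub n r s) ^ 2) (rangeZ rb) <= LU R2 (vsub n r s)).
    { rewrite <- lsum_scal. unfold LU.
      rewrite (lsum_ext _ (fun x => Ut2 ((k0 - x)%Z :: vsub n r s))).
      2:{ intros x _. rewrite Ut2_eq, Wt_S by auto. reflexivity. }
      rewrite <- (lsum_map (fun y => Ut2 (y :: vsub n r s)) (fun x => (k0 - x)%Z)).
      apply lsum_incl_le.
      - apply NoDup_map_in. apply rangeZ_NoDup. intros; lia.
      - intros y Hy. apply in_map_iff in Hy as [x [<- Hx]]. apply rangeZ_In in Hx. apply rangeZ_In. lia.
      - intros; apply Ut2_nonneg. }
    assert (HLV : Wt n sg s * lsum (fun x => Cvt (x :: s) ^ 2) (rangeZ rb) = LV rb s).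
    { rewrite <- lsum_scal. unfold LV. apply lsum_ext. intros x _. rewrite Vt2_eq, Wt_S by auto. reflexivity. }
    assert (0 <= lsum (fun x => Cut ((k0 - x)%Z :: vsub n r s) ^ 2) (rangeZ rb)) by (apply lsum_nonneg; intros; apply pow2_ge_0).
    assert (0 <= lsum (fun x => Cvt (x :: s) ^ 2) (rangeZ rb)) by (apply lsum_nonneg; intros; apply pow2_ge_0).
    pose proof (Wt_pos n sg (vsub n r s)). pose proof (Wt_pos n sg s).
    rewrite <- HLV.
    apply Rle_trans with (Wt n sg (vsub n r s) * Wt n sg s *
      (lsum (fun x => Cut ((k0 - x)%Z :: vsub n r s) ^ 2) (rangeZ rb) * lsum (fun x => Cvt (x :: s) ^ 2) (rangeZ rb))).
    + apply Rmult_le_compat_l; [nra|]. exact HCS.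
    + assert (0 <= LU R2 (vsub n r s)) by (unfold LU; apply lsum_nonneg; intros; apply Ut2_nonneg).
      apply Rle_trans with (LU R2 (vsub n r s) * (Wt n sg s * lsum (fun x => Cvt (x :: s) ^ 2) (rangeZ rb))).
      * replace (Wt n sg (vsub n r s) * Wt n sg s * (lsum (fun x => Cut ((k0 - x)%Z :: vsub n r s) ^ 2) (rangeZ rb) * lsum (fun x => Cvt (x :: s) ^ 2) (rangeZ rb)))
          with ((Wt n sg (vsub n r s) * lsum (fun x => Cut ((k0 - x)%Z :: vsub n r s) ^ 2) (rangeZ rb)) * (Wt n sg s * lsum (fun x => Cvt (x :: s) ^ 2) (rangeZ rb))) by ring.
        apply Rmult_le_compat_r; [nra|]. exact HLU.
      * lra. }
  assert (HS0 : 0 <= S0) by (eapply Rle_trans; eauto).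
  assert (Hsq : (lsum (fun k' => Cmod (u (vsub (S n) (k0 :: r) k')) * Cmod (v k')) G) ^ 2 <= S0 ^ 2) by (simpl; nra).
  pose proof (Wt_pos n sg r) as Hwr.
  apply Rle_trans with (Wt n sg r * S0 ^ 2). apply Rmult_le_compat_l; lra.
  rewrite Hb. apply Rle_trans with (Wt n sg r * (lsum M (box n rb) * lsum (fun s => Tsum s ^ 2 / M s) (box n rb))).
  apply Rmult_le_compat_l; lra.
  assert (HMs : lsum M (box n rb) <= Cm) by (apply HCm; auto).
  assert (HM0 : 0 <= lsum M (box n rb)) by (apply lsum_nonneg; intros; left; auto).
  assert (HT0 : 0 <= lsum (fun s => Tsum s ^ 2 / M s) (box n rb)).
  { apply lsum_nonneg; intros s _. apply Rmult_le_pos. apply pow2_ge_0. left; apply Rinv_0_lt_compat; auto. }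
  assert (Hd' : Wt n sg r * lsum (fun s => Tsum s ^ 2 / M s) (box n rb) <= lsum (fun s => LU R2 (vsub n r s) * LV rb s) (box n rb)).
  { rewrite <- lsum_scal. apply lsum_le. auto. }
  assert (0 <= lsum (fun s => LU R2 (vsub n r s) * LV rb s) (box n rb)) by (eapply Rle_trans; [|exact Hd']; apply Rmult_le_pos; lra).
  replace (Wt n sg r * (lsum M (box n rb) * lsum (fun s => Tsum s ^ 2 / M s) (box n rb)))
    with (lsum M (box n rb) * (Wt n sg r * lsum (fun s => Tsum s ^ 2 / M s) (box n rb))) by ring.
  apply Rmult_le_compat; auto. apply Rmult_le_pos; lra.
Qed.

Lemma box_nth_bound m R k j : In k (box m R) -> (j < m)%nat -> (- Z.of_nat R <= nth j k 0%Z <= Z.of_nat R)%Z.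
Proof.
  intros Hk Hj. apply box_In in Hk as [Hl Hf]. rewrite Forall_forall in Hf. apply Hf. apply nth_In. lia.
Qed.

Lemma vsub_in_box m RF rb r s : In r (box m RF) -> In s (box m rb) -> In (vsub m r s) (box m (RF + rb)).
Proof.
  intros Hr Hs. apply box_In. split. apply vsub_length. apply Forall_forall. intros z Hz.
  apply In_nth with (d := 0%Z) in Hz as [j [Hj Hz]]. rewrite vsub_length in Hj. rewrite <- Hz, vsub_nth by auto.
  pose proof (box_nth_bound m RF r j Hr Hj). pose proof (box_nth_bound m rb s j Hs Hj). lia.
Qed.

Lemma L3 A B RF rb :
  (forall L, NoDup L -> lsum Ut2 L <= A) -> (forall L, NoDup L -> lsum Vt2 L <= B) ->
  lsum (fun r => lsum (fun s => LU (RF + rb) (vsub n r s) * LV rb s) (box n rb)) (box n RF) <= A * B.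
Proof.
  intros HA HB.
  assert (HA0 : 0 <= A) by (specialize (HA [] (NoDup_nil _)); simpl in HA; lra).
  rewrite lsum_swap.
  assert (HUs : forall s, In s (box n rb) -> lsum (fun r => LU (RF + rb) (vsub n r s)) (box n RF) <= A).
  { intros s Hs. rewrite <- (lsum_map (LU (RF + rb)) (fun r => vsub n r s)).
    eapply Rle_trans. apply lsum_incl_le with (M := box n (RF + rb)).
    - apply NoDup_map_in. apply box_NoDup. intros a b Ha Hb E. apply box_In in Ha as [Ha _]. apply box_In in Hb as [Hb _].
      apply (vsub_inj_l n s); auto.
    - intros y Hy. apply in_map_iff in Hy as [r [<- Hr]]. apply vsub_in_box; auto.
    - intros; unfold LU; apply lsum_nonneg; intros; apply Ut2_nonneg.
    - unfold LU. rewrite lsum_swap, <- lsum_box_S. apply HA. apply box_NoDup. }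
  apply Rle_trans with (lsum (fun s => LV rb s * A) (box n rb)).
  - apply lsum_le. intros s Hs. rewrite (lsum_ext _ (fun r => LV rb s * LU (RF + rb) (vsub n r s))) by (intros; ring).
    rewrite lsum_scal. apply Rmult_le_compat_l. unfold LV; apply lsum_nonneg; intros; apply Vt2_nonneg. auto.
  - rewrite (lsum_ext _ (fun s => A * LV rb s)) by (intros; ring). rewrite lsum_scal.
    apply Rmult_le_compat_l; auto. unfold LV. rewrite lsum_swap, <- lsum_box_S. apply HB. apply box_NoDup.
Qed.
End T3.

Lemma core_t3 n alpha sigma beta : sigma 0%nat = 0 -> (forall j, (j < n)%nat -> sigma (S j) > 1/2) ->
  alpha 0%nat <> 0 -> beta > 1/4 ->
  exists C3, 0 <= C3 /\ forall (u v : list Z -> Cpx) A B,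
    SqNormLe (S n) alpha sigma 0 (fun k => Cmod (u k)) A ->
    SqNormLe (S n) alpha sigma 0 (fun k => Cmod (v k)) B ->
    forall F G, FinSub (InDotZN (S n)) F -> (forall k, In k F -> FinSub (ConvDom (S n) k) (G k)) ->
    lsum (fun k => Wt (S n) sigma k * (lsum (fun k' => pw (adot (S n) alpha k) (- (2 * beta)) *
            (Cmod (u (vsub (S n) k k')) * Cmod (v k'))) (G k)) ^ 2) F <= C3 * (A * B).
Proof.
  intros H0 Hs Ha Hb.
  destruct (msum_i n (fun j => sigma (S j)) Hs) as [Cm [HCm0 HCm]].
  destruct (sum1D (alpha 0%nat) (2 * (2 * beta)) Ha) as [C1 HC1]; [lra|].
  assert (HC1p : 0 <= C1) by (specialize (HC1 0 [] (NoDup_nil _)); simpl in HC1; lra).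
  exists (Cm * C1). split. apply Rmult_le_pos; auto.
  intros u v A B Hu Hv F G HF HG.
  pose proof (SqNorm_nonneg _ _ _ _ _ Hu) as HA. pose proof (SqNorm_nonneg _ _ _ _ _ Hv) as HB.
  destruct (box_cover (S n) F) as [RF HRF]. { intros k Hk. apply HF; auto. }
  destruct (box_cover (S n) (flat_map G F)) as [rb Hrb].
  { intros k' Hk'. apply in_flat_map in Hk' as [k [Hk Hk']]. apply (HG k Hk); auto. }
  set (Phi := fun r => lsum (fun s => LU n sigma u (RF + rb) (vsub n r s) * LV n sigma v rb s) (box n rb)).
  assert (HPhi : forall r, 0 <= Phi r).
  { intros r. unfold Phi. apply lsum_nonneg. intros. apply Rmult_le_pos.
    unfold LU; apply lsum_nonneg; intros; apply Ut2_nonneg. unfold LV; apply lsum_nonneg; intros; apply Vt2_nonneg. }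
  set (Psi := fun k => pw (adot (S n) alpha k) (- (2 * (2 * beta))) * (Cm * Phi (tl k))).
  apply Rle_trans with (lsum Psi F).
  - apply lsum_le. intros k Hk. destruct (proj2 HF k Hk) as [Hkl Hk0].
    destruct k as [|k0 r]; [discriminate|]. simpl in Hkl. injection Hkl as Hkl.
    rewrite lsum_scal, Wt_S by auto. unfold Psi. simpl tl. rewrite <- (pw_sq _ (2 * beta)).
    replace (Wt n (fun j => sigma (S j)) r * (pw (adot (S n) alpha (k0 :: r)) (- (2 * beta)) *
        lsum (fun k' => Cmod (u (vsub (S n) (k0 :: r) k')) * Cmod (v k')) (G (k0 :: r))) ^ 2)
      with (pw (adot (S n) alpha (k0 :: r)) (- (2 * beta)) ^ 2 * (Wt n (fun j => sigma (S j)) r *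
        lsum (fun k' => Cmod (u (vsub (S n) (k0 :: r) k')) * Cmod (v k')) (G (k0 :: r)) ^ 2)) by ring.
    apply Rmult_le_compat_l. apply pow2_ge_0.
    apply (L1 n sigma u v H0 Cm k0 r (G (k0 :: r)) rb (RF + rb)); auto.
    + split; [simpl; lia|auto].
    + intros k' Hk'. apply Hrb. apply in_flat_map. exists (k0 :: r); auto.
    + assert (Hin := HRF _ Hk). pose proof (box_nth_bound (S n) RF (k0 :: r) 0 Hin ltac:(lia)). simpl in H. lia.
  - apply Rle_trans with (lsum Psi (box (S n) RF)).
    + apply lsum_incl_le; auto. apply HF. intros k _. unfold Psi. apply Rmult_le_pos. left; apply pw_pos.
      apply Rmult_le_pos; auto.
    + rewrite lsum_box_S, lsum_swap.
      apply Rle_trans with (lsum (fun r => Cm * Phi r * C1) (box n RF)).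
      * apply lsum_le. intros r _.
        rewrite (lsum_ext _ (fun x => Cm * Phi r * pw (alpha 0%nat * IZR x + adot n (fun j => alpha (S j)) r) (- (2 * (2 * beta))))).
        2:{ intros x _. unfold Psi. simpl tl. rewrite adot_S. ring. }
        rewrite lsum_scal. apply Rmult_le_compat_l. apply Rmult_le_pos; auto. apply HC1. apply rangeZ_NoDup.
      * rewrite (lsum_ext _ (fun r => (Cm * C1) * Phi r)) by (intros; ring). rewrite lsum_scal.
        apply Rmult_le_compat_l. apply Rmult_le_pos; auto.
        apply L3.
        -- intros L HL. unfold Ut2. apply trunc_bound with (P := fun y => Wt (S n) sigma y * Cmod (u y) ^ 2); auto.
           apply (SqNorm_Wt (S n) alpha sigma u A Hu).
        -- intros L HL. unfold Vt2. apply trunc_bound with (P := fun y => Wt (S n) sigma y * Cmod (v y) ^ 2); auto.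
           apply (SqNorm_Wt (S n) alpha sigma v B Hv).
Qed.

Lemma core_gen N alpha sigma (Xf : list Z -> list Z -> R) C : 0 <= C ->
  (forall k k', 0 < Xf k k') ->
  (forall k R, length k = N -> lsum (fun k' => Xf k k' ^ 2 * (Wt N sigma k / (Wt N sigma (vsub N k k') * Wt N sigma k'))) (box N R) <= C) ->
  forall (u v : list Z -> Cpx) A B,
    SqNormLe N alpha sigma 0 (fun k => Cmod (u k)) A ->
    SqNormLe N alpha sigma 0 (fun k => Cmod (v k)) B ->
    forall F G, FinSub (InDotZN N) F -> (forall k, In k F -> FinSub (ConvDom N k) (G k)) ->
    lsum (fun k => Wt N sigma k * (lsum (fun k' => Xf k k' * (Cmod (u (vsub N k k')) * Cmod (v k'))) (G k)) ^ 2) F <= C * (A * B).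
Proof.
  intros HC0 HX HC u v A B Hu Hv F G HF HG.
  set (Pu := fun y => Wt N sigma y * Cmod (u y) ^ 2). set (Pv := fun y => Wt N sigma y * Cmod (v y) ^ 2).
  eapply Rle_trans with (lsum (fun k => C * lsum (fun k' => Pu (vsub N k k') * Pv k') (G k)) F).
  - apply lsum_le. intros k Hk.
    eapply Rle_trans.
    + apply (perk_CS N sigma (fun k k' => Xf k k' ^ 2) (fun k k' => Xf k k' * (Cmod (u (vsub N k k')) * Cmod (v k'))) Pu Pv k (G k)).
      intros; apply pow_lt; auto.
      intros k' _. unfold Pu, Pv. apply T_ident. apply Rgt_not_eq, HX.
    + apply Rmult_le_compat_r.
      * apply lsum_nonneg. intros; unfold Pu, Pv. apply Rmult_le_pos; apply Rmult_le_pos; try (left; apply Wt_pos); apply pow2_ge_0.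
      * destruct (G_in_box N k (G k) (HG k Hk)) as [R HR].
        eapply Rle_trans. apply lsum_incl_le with (M := box N R); auto. apply (HG k Hk).
        intros k' _. apply Rmult_le_pos. apply pow2_ge_0. apply Rlt_le, Rdiv_lt_0_compat. apply Wt_pos. apply Rmult_lt_0_compat; apply Wt_pos.
        apply HC. apply HF; auto.
  - rewrite lsum_scal. apply Rmult_le_compat_l; auto.
    apply pair_bound with (N := N); auto.
    + intros; unfold Pu; apply Rmult_le_pos; [left; apply Wt_pos|apply pow2_ge_0].
    + intros; unfold Pv; apply Rmult_le_pos; [left; apply Wt_pos|apply pow2_ge_0].
    + apply (SqNorm_Wt N alpha sigma u A Hu).
    + apply (SqNorm_Wt N alpha sigma v B Hv).
Qed.

Definition Tii N alpha beta (u v : list Z -> Cpx) (k k' : list Z) : R :=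
  Rpower (jbr (Rabs (adot N alpha k) * Rabs (adot N alpha (vsub N k k')) * Rabs (adot N alpha k'))) (- beta)
    * Cmod (u (vsub N k k')) * Cmod (v k').

Lemma core_ii n alpha sigma beta : sigma 0%nat = 0 -> (forall j, (j < n)%nat -> sigma (S j) > 1/2) ->
  alpha 0%nat <> 0 -> beta > 1/4 ->
  exists C, 0 <= C /\ forall (u v : list Z -> Cpx) A B,
    SqNormLe (S n) alpha sigma 0 (fun k => Cmod (u k)) A ->
    SqNormLe (S n) alpha sigma 0 (fun k => Cmod (v k)) B ->
    forall F G, FinSub (InDotZN (S n)) F -> (forall k, In k F -> FinSub (ConvDom (S n) k) (G k)) ->
    lsum (fun k => Wt (S n) sigma k * (lsum (Tii (S n) alpha beta u v k) (G k)) ^ 2) F <= C * (A * B).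
Proof.
  intros H0 Hs Ha Hb.
  destruct (msum_ii n alpha sigma beta H0 Hs Ha Hb) as [C12 [HC12 HC12']].
  destruct (core_t3 n alpha sigma beta H0 Hs Ha Hb) as [C3 [HC3 HC3']].
  set (K := Kb beta). assert (HK : 0 < K) by apply Kb_pos.
  exists (3 * K ^ 2 * (C12 + C12 + C3)). split. { assert (0 < K ^ 2) by (apply pow_lt; auto). nra. }
  intros u v A B Hu Hv F G HF HG.
  pose proof (SqNorm_nonneg _ _ _ _ _ Hu) as HA. pose proof (SqNorm_nonneg _ _ _ _ _ Hv) as HB.
  set (N := S n).
  set (S1 := fun k => lsum (fun k' => pw (adot N alpha (vsub N k k')) (- (2 * beta)) * (Cmod (u (vsub N k k')) * Cmod (v k'))) (G k)).
  set (S2 := fun k => lsum (fun k' => pw (adot N alpha k') (- (2 * beta)) * (Cmod (u (vsub N k k')) * Cmod (v k'))) (G k)).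
  set (S3 := fun k => lsum (fun k' => pw (adot N alpha k) (- (2 * beta)) * (Cmod (u (vsub N k k')) * Cmod (v k'))) (G k)).
  assert (E1 : lsum (fun k => Wt N sigma k * S1 k ^ 2) F <= C12 * (A * B)).
  { apply (core_gen N alpha sigma (fun k k' => pw (adot N alpha (vsub N k k')) (- (2 * beta))) C12); auto.
    intros; apply pw_pos. intros k R Hk. apply HC12'; auto. }
  assert (E2 : lsum (fun k => Wt N sigma k * S2 k ^ 2) F <= C12 * (A * B)).
  { apply (core_gen N alpha sigma (fun k k' => pw (adot N alpha k') (- (2 * beta))) C12); auto.
    intros; apply pw_pos. intros k R Hk. apply HC12'; auto. }
  assert (E3 : lsum (fun k => Wt N sigma k * S3 k ^ 2) F <= C3 * (A * B)) by (apply HC3'; auto).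
  apply Rle_trans with (lsum (fun k => 3 * K ^ 2 * (Wt N sigma k * S1 k ^ 2 + Wt N sigma k * S2 k ^ 2 + Wt N sigma k * S3 k ^ 2)) F).
  - apply lsum_le. intros k Hk.
    assert (HT : lsum (Tii N alpha beta u v k) (G k) <= K * (S1 k + S2 k + S3 k)).
    { unfold S1, S2, S3. rewrite <- !lsum_plus, <- lsum_scal. apply lsum_le. intros k' _.
      unfold Tii. fold (pw (Rabs (adot N alpha k) * Rabs (adot N alpha (vsub N k k')) * Rabs (adot N alpha k')) (- beta)).
      pose proof (Bsplit beta (adot N alpha k) (adot N alpha (vsub N k k')) (adot N alpha k') ltac:(lra)) as HB'.
      assert (EA : adot N alpha k = adot N alpha (vsub N k k') + adot N alpha k') by (rewrite adot_vsub; ring).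
      specialize (HB' EA).
      fold K in HB'.
      assert (0 <= Cmod (u (vsub N k k')) * Cmod (v k')) by (apply Rmult_le_pos; apply Cmod_nonneg).
      apply Rmult_le_compat_r with (r := Cmod (u (vsub N k k')) * Cmod (v k')) in HB'; auto.
      replace (pw (Rabs (adot N alpha k) * Rabs (adot N alpha (vsub N k k')) * Rabs (adot N alpha k')) (- beta) *
               Cmod (u (vsub N k k')) * Cmod (v k'))
        with (pw (Rabs (adot N alpha k) * Rabs (adot N alpha (vsub N k k')) * Rabs (adot N alpha k')) (- beta) *
               (Cmod (u (vsub N k k')) * Cmod (v k'))) by ring.
      lra. }
    assert (HT0 : 0 <= lsum (Tii N alpha beta u v k) (G k)).
    { apply lsum_nonneg. intros; unfold Tii. apply Rmult_le_pos. apply Rmult_le_pos. left; apply Rpower_pos.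
      apply Cmod_nonneg. apply Cmod_nonneg. }
    assert (0 <= S1 k) by (apply lsum_nonneg; intros; apply Rmult_le_pos; [left; apply pw_pos|apply Rmult_le_pos; apply Cmod_nonneg]).
    assert (0 <= S2 k) by (apply lsum_nonneg; intros; apply Rmult_le_pos; [left; apply pw_pos|apply Rmult_le_pos; apply Cmod_nonneg]).
    assert (0 <= S3 k) by (apply lsum_nonneg; intros; apply Rmult_le_pos; [left; apply pw_pos|apply Rmult_le_pos; apply Cmod_nonneg]).
    pose proof (Wt_pos N sigma k).
    assert (lsum (Tii N alpha beta u v k) (G k) ^ 2 <= K ^ 2 * (S1 k + S2 k + S3 k) ^ 2).
    { rewrite <- Rpow_mult_distr. apply pow_incr. split; auto. }
    assert ((S1 k + S2 k + S3 k) ^ 2 <= 3 * (S1 k ^ 2 + S2 k ^ 2 + S3 k ^ 2)).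
    { pose proof (pow2_ge_0 (S1 k - S2 k)). pose proof (pow2_ge_0 (S2 k - S3 k)). pose proof (pow2_ge_0 (S1 k - S3 k)). simpl in *. nra. }
    assert (0 < K ^ 2) by (apply pow_lt; auto).
    assert (K ^ 2 * (S1 k + S2 k + S3 k) ^ 2 <= K ^ 2 * (3 * (S1 k ^ 2 + S2 k ^ 2 + S3 k ^ 2))) by (apply Rmult_le_compat_l; lra).
    assert (Wt N sigma k * lsum (Tii N alpha beta u v k) (G k) ^ 2 <= Wt N sigma k * (K ^ 2 * (3 * (S1 k ^ 2 + S2 k ^ 2 + S3 k ^ 2))))
      by (apply Rmult_le_compat_l; lra).
    lra.
  - rewrite lsum_scal, !lsum_plus. assert (0 < K ^ 2) by (apply pow_lt; auto). nra.
Qed.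

Lemma adot_zeros m alpha : adot m alpha (repeat 0%Z m) = 0.
Proof.
  unfold adot. induction (seq 0 m); simpl. auto. rewrite IHl.
  destruct (Nat.lt_ge_cases a m) as [H|H].
  - rewrite nth_repeat. simpl. ring.
  - rewrite nth_overflow by (rewrite repeat_length; lia). simpl. ring.
Qed.

Lemma alpha0_nonzero n alpha : NonResonant (S n) alpha -> alpha 0%nat <> 0.
Proof.
  intros H E. apply (H (1%Z :: repeat 0%Z n)).
  - split. simpl. rewrite repeat_length. auto. exists 0%nat. split. lia. simpl. lia.
  - rewrite adot_S, adot_zeros, E. ring.
Qed.

Lemma part_ii N alpha (Halpha : NonResonant N alpha) :
  forall (sigma : nat -> R) (beta : R),
     (1 <= N)%nat ->
     sigma 0%nat = 0 ->
     (forall j, (1 <= j < N)%nat -> sigma j > 1/2) ->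
     beta > 1/4 ->
     exists Cst, 0 < Cst /\
       forall (u v : list Z -> Cpx) (A B : R),
         SqNormLe N alpha sigma 0 (fun k => Cmod (u k)) A ->
         SqNormLe N alpha sigma 0 (fun k => Cmod (v k)) B ->
         exists W : list Z -> R,
           (forall k, InDotZN N k ->
              RHasSum (ConvDom N k)
                (fun k' => Rpower (jbr (Rabs (adot N alpha k) *
                                        Rabs (adot N alpha (vsub N k k')) *
                                        Rabs (adot N alpha k'))) (- beta)
                           * Cmod (u (vsub N k k')) * Cmod (v k'))
                (W k)) /\
           SqNormLe N alpha sigma 0 W (Cst ^ 2 * A * B).
Proof.
  intros sigma beta HN H0 Hs Hb. destruct N as [|n]; [lia|].
  assert (Ha := alpha0_nonzero n alpha Halpha).
  assert (Hs' : forall j, (j < n)%nat -> sigma (S j) > 1/2) by (intros j Hj; apply Hs; lia).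
  assert (Hs0 : forall j, (j < S n)%nat -> 0 <= sigma j).
  { intros [|j] Hj. lra. specialize (Hs' j ltac:(lia)). lra. }
  destruct (core_ii n alpha sigma beta H0 Hs' Ha Hb) as [C [HC0 HC]].
  exists (sqrt (C + 1)). split. apply sqrt_lt_R0; lra.
  intros u v A B Hu Hv. pose proof (SqNorm_nonneg _ _ _ _ _ Hu) as HA. pose proof (SqNorm_nonneg _ _ _ _ _ Hv) as HB.
  assert (HTn : forall k k', 0 <= Tii (S n) alpha beta u v k k').
  { intros; unfold Tii. apply Rmult_le_pos. apply Rmult_le_pos. left; apply Rpower_pos. apply Cmod_nonneg. apply Cmod_nonneg. }
  assert (Hex : forall k, exists s, 0 <= s /\ (InDotZN (S n) k -> RHasSum (ConvDom (S n) k) (Tii (S n) alpha beta u v k) s)).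
  { intros k. destruct (Classical_Prop.classic (InDotZN (S n) k)) as [Hk|Hk]; [|exists 0; split; [lra|intros; contradiction]].
    destruct (nonneg_sum_exists (ConvDom (S n) k) (Tii (S n) alpha beta u v k) ((A + B) / 2)) as [s [Hs1 _]].
    - intros; auto.
    - intros G HG. eapply Rle_trans; [|apply (conv_bound (S n) alpha sigma u v A B k Hs0 Hu Hv Hk G HG)].
      apply lsum_le. intros k' _. unfold Tii.
      pose proof (pw_le1 (Rabs (adot (S n) alpha k) * Rabs (adot (S n) alpha (vsub (S n) k k')) * Rabs (adot (S n) alpha k')) beta ltac:(lra)).
      unfold pw in H. assert (0 <= Cmod (u (vsub (S n) k k')) * Cmod (v k')) by (apply Rmult_le_pos; apply Cmod_nonneg).
      rewrite Rmult_assoc. rewrite <- (Rmult_1_l (Cmod (u (vsub (S n) k k')) * Cmod (v k'))) at 2.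
      apply Rmult_le_compat_r; auto.
    - exists s. split; auto. apply (RHasSum_nonneg _ _ _ Hs1). intros; auto. }
  set (W := fun k => proj1_sig (constructive_indefinite_description _ (Hex k))).
  assert (HW : forall k, 0 <= W k /\ (InDotZN (S n) k -> RHasSum (ConvDom (S n) k) (Tii (S n) alpha beta u v k) (W k))).
  { intros k. unfold W. destruct (constructive_indefinite_description _ (Hex k)) as [s Hs'']. simpl. auto. }
  exists W. split.
  - intros k Hk. apply (proj2 (HW k) Hk).
  - intros F HF.
    rewrite (lsum_ext _ (fun k => Wt (S n) sigma k * W k ^ 2)) by (intros; rewrite Gweight_eq; auto).
    eapply Rle_trans.
    + refine (final_eps (S n) (Wt (S n) sigma) W (Tii (S n) alpha beta u v) (C * (A * B)) _ _ _ _ _ F HF).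
      * intros; apply Wt_ge1; auto.
      * auto.
      * intros; apply HW.
      * intros F' G HF' HG. apply HC; auto.
      * intros k e Hk He. destruct (RHasSum_approx _ _ _ e (proj2 (HW k) Hk) He) as [G [HG HGa]].
        exists G. split; auto. apply Rabs_def2 in HGa. lra.
    + rewrite sqrt_pow2' by lra. assert (0 <= A * B) by nra. nra.
Qed.

Theorem lemma2p2 (N : nat) (alpha : nat -> R) (Halpha : NonResonant N alpha) :
  (* (i) *)
  (forall sigma : nat -> R,
     (forall j, (j < N)%nat -> sigma j > 1/2) ->
     exists Cst, 0 < Cst /\
       forall (u v : list Z -> Cpx) (A B : R),
         SqNormLe N alpha sigma 0 (fun k => Cmod (u k)) A ->
         SqNormLe N alpha sigma 0 (fun k => Cmod (v k)) B ->
         (exists w, IsProduct N u v w) /\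
         (forall w, IsProduct N u v w ->
            SqNormLe N alpha sigma 0 (fun k => Cmod (w k)) (Cst ^ 2 * A * B)))
  /\
  (* (ii) *)
  (forall (sigma : nat -> R) (beta : R),
     (1 <= N)%nat ->
     sigma 0%nat = 0 ->
     (forall j, (1 <= j < N)%nat -> sigma j > 1/2) ->
     beta > 1/4 ->
     exists Cst, 0 < Cst /\
       forall (u v : list Z -> Cpx) (A B : R),
         SqNormLe N alpha sigma 0 (fun k => Cmod (u k)) A ->
         SqNormLe N alpha sigma 0 (fun k => Cmod (v k)) B ->
         exists W : list Z -> R,
           (forall k, InDotZN N k ->
              RHasSum (ConvDom N k)
                (fun k' => Rpower (jbr (Rabs (adot N alpha k) *
                                        Rabs (adot N alpha (vsub N k k')) *
                                        Rabs (adot N alpha k'))) (- beta)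
                           * Cmod (u (vsub N k k')) * Cmod (v k'))
                (W k)) /\
           SqNormLe N alpha sigma 0 W (Cst ^ 2 * A * B)).
Proof.
  split. apply part_i. apply part_ii; auto.
Qed.
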